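(* Let $\mathcal{B}_4$, $\pi_{\lambda,\mu}$ ($\lambda\neq0,\mu\in\mathbb{R}$), the group Fourier transform $\pi_{\lambda,\mu}(\kappa)=\hat\kappa(\pi_{\lambda,\mu})$ and the difference operators $\Delta_{x_i}$ be as in the context. Then for suitable distributions $\kappa$ on $\mathcal{B}_4$ (e.g. $\kappa\in\mathcal{S}(\mathbb{R}^4)$), $$\Delta_{x_1}\hat\kappa(\pi_{\lambda,\mu})=\frac{i}{\lambda}\Big(\pi_{\lambda,\mu}(X_3)\pi_{\lambda,\mu}(\kappa)-\pi_{\lambda,\mu}(\kappa)\pi_{\lambda,\mu}(X_3)\Big),$$ where $\pi_{\lambda,\mu}(X_3)$ is the operator of multiplication by $-i\lambda u$, and $$\Delta_{x_2}\hat\kappa(\pi_{\lambda,\mu})=\frac{2\lambda}{i}\,\partial_\mu\,\pi_{\lambda,\mu}(\kappa).$$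
   Context: The Engel group $\mathcal{B}_4$ is $\mathbb{R}^4$ with the law $(x_1,x_2,x_3,x_4)\circ(y_1,y_2,y_3,y_4)=(x_1+y_1,x_2+y_2,x_3+y_3-x_1y_2,x_4+y_4+\frac12x_1^2y_2-x_1y_3)$ and Haar measure the Lebesgue measure. Its left-invariant vector fields are $X_1=\partial_{x_1}$, $X_2=\partial_{x_2}-x_1\partial_{x_3}+\frac{x_1^2}{2}\partial_{x_4}$, $X_3=\partial_{x_3}-x_1\partial_{x_4}$, $X_4=\partial_{x_4}$. For $\lambda\neq0$, $\mu\in\mathbb{R}$, $\pi_{\lambda,\mu}(x)h(u)=\exp\big(i(-\frac{\mu}{2\lambda}x_2+\lambda x_4-\lambda x_3u+\frac{\lambda}{2}x_2u^2)\big)h(u+x_1)$ on $L^2(\mathbb{R})$. The group Fourier transform is $\hat\kappa(\pi_{\lambda,\mu})=\pi_{\lambda,\mu}(\kappa)=\int_{\mathcal{B}_4}\kappa(x)\pi_{\lambda,\mu}(x)^*dx$; explicitly $\pi_{\lambda,\mu}(\kappa)h(u)=\int_{\mathbb{R}^4}\kappa(x)\exp\big(i(\frac{\mu}{2\lambda}x_2-\lambda x_4+\lambda x_3(u-x_1)-\frac{\lambda}{2}x_2(u-x_1)^2)\big)h(u-x_1)\,dx$. The same symbol $\pi_{\lambda,\mu}$ denotes the infinitesimal representation: $\pi_{\lambda,\mu}(X_1)=\partial_u$, $\pi_{\lambda,\mu}(X_2)=\frac{i}{2}(\lambda u^2-\frac{\mu}{\lambda})$, $\pi_{\lambda,\mu}(X_3)=-i\lambda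 u$, $\pi_{\lambda,\mu}(X_4)=i\lambda$ (multiplication operators except the first). The difference operators are defined by $\Delta_{x_i}\hat\kappa(\pi_{\lambda,\mu}):=\pi_{\lambda,\mu}(x_i\kappa)$, $i=1,\dots,4$, where $x_i\kappa$ is $\kappa$ multiplied by the coordinate function $x_i$. $\partial_\mu\pi_{\lambda,\mu}(\kappa)$ denotes the derivative in the parameter $\mu$ of the operator family (applied pointwise to $\pi_{\lambda,\mu}(\kappa)h(u)$). *)

(* Defs.v *)
From Stdlib Require Import Reals List.
From Coquelicot Require Import Coquelicot.
Open Scope R_scope.

Definition fun4 := R -> R -> R -> R -> R.

Definition pdiff (j : nat) (f : fun4) : fun4 := fun a b c d =>
  match j with
  | O => Derive (fun t => f t b c d) a
  | 1%nat => Derive (fun t => f a t c d) b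
  | 2%nat => Derive (fun t => f a b t d) c
  | _ => Derive (fun t => f a b c t) d
  end.

Definition pdiffable (j : nat) (f : fun4) (a b c d : R) : Prop :=
  match j with
  | O => ex_derive (fun t => f t b c d) a
  | 1%nat => ex_derive (fun t => f a t c d) b
  | 2%nat => ex_derive (fun t => f a b t d) c
  | _ => ex_derive (fun t => f a b c t) d
  end.

(** iterated partial derivative D^l f (the head of l is applied last) *)
Fixpoint iter_pdiff (l : list nat) (f : fun4) : fun4 :=
  match l with
  | nil => f
  | j :: l' => pdiff j (iter_pdiff l' f)
  end.

Definition schwartz4_real (f : fun4) : Prop :=
  (forall (l : list nat) (j : nat) (a b c d : R), pdiffable j (iter_pdiff l f) a b c d) /\
  (forall (l : list nat) (n : nat), exists M : R, forall a b c d : R,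
     (1 + a ^ 2 + b ^ 2 + c ^ 2 + d ^ 2) ^ n * Rabs (iter_pdiff l f a b c d) <= M).

Definition schwartz4 (k : R -> R -> R -> R -> C) : Prop :=
  schwartz4_real (fun a b c d => Re (k a b c d)) /\
  schwartz4_real (fun a b c d => Im (k a b c d)).

Definition schwartz1_real (g : R -> R) : Prop :=
  (forall (k : nat) (x : R), ex_derive (Derive_n g k) x) /\
  (forall (k n : nat), exists M : R, forall x : R, (1 + x ^ 2) ^ n * Rabs (Derive_n g k x) <= M).

Definition schwartz1 (h : R -> C) : Prop :=
  schwartz1_real (fun x => Re (h x)) /\ schwartz1_real (fun x => Im (h x)).

Definition cis (t : R) : C := (cos t, sin t).

Definition intR (f : R -> C) : C :=
  @RInt_gen C_R_CompleteNormedModule f (Rbar_locally m_infty) (Rbar_locally p_infty).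

(** Group Fourier transform  pi_{lambda,mu}(kappa) applied to h, evaluated at u:
    int_{R^4} kappa(x) exp(i(mu/(2 lambda) x2 - lambda x4 + lambda x3 (u-x1)
                         - lambda/2 x2 (u-x1)^2)) h(u-x1) dx
    (written as an iterated integral dx4 dx3 dx2 dx1). *)
Definition piF (lam mu : R) (kappa : R -> R -> R -> R -> C) (h : R -> C) (u : R) : C :=
  intR (fun x1 => intR (fun x2 => intR (fun x3 => intR (fun x4 =>
    Cmult (Cmult (kappa x1 x2 x3 x4)
      (cis (mu / (2 * lam) * x2 - lam * x4 + lam * x3 * (u - x1)
            - lam / 2 * x2 * (u - x1) ^ 2)))
      (h (u - x1)))))).

Definition piX3 (lam : R) (h : R -> C) (u : R) : C :=
  Cmult (Copp (Cmult Ci (RtoC (lam * u)))) (h u).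

Definition Delta_x1 (lam mu : R) (kappa : R -> R -> R -> R -> C) :=
  piF lam mu (fun x1 x2 x3 x4 => Cmult (RtoC x1) (kappa x1 x2 x3 x4)).
Definition Delta_x2 (lam mu : R) (kappa : R -> R -> R -> R -> C) :=
  piF lam mu (fun x1 x2 x3 x4 => Cmult (RtoC x2) (kappa x1 x2 x3 x4)).

(* Main.v *)
Require Import Defs.
From Stdlib Require Import Reals.
From Coquelicot Require Import Coquelicot.
From Stdlib Require Import Lra Lia Psatz FunctionalExtensionality List.
Open Scope R_scope.


Definition w (t : R) : R := / (1 + t ^ 2).

Lemma w_pos t : 0 < w t.
Proof. unfold w. apply Rinv_0_lt_compat. nra. Qed.

Lemma w_le1 t : w t <= 1.
Proof. unfold w. rewrite <- Rinv_1. apply Rinv_le_contravar; nra. Qed.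

Lemma w_cont x : continuous w x.
Proof.
  apply continuity_pt_filterlim. unfold w. apply continuity_pt_inv.
  reg. nra.
Qed.

Lemma is_RInt_w a b : is_RInt w a b (atan b - atan a).
Proof.
  apply (is_RInt_derive (V:=R_CompleteNormedModule) atan w a b).
  - intros x _. apply is_derive_Reals. unfold w. apply derivable_pt_lim_atan.
  - intros x _. apply w_cont.
Qed.

Lemma atan_tails eps : 0 < eps -> exists T, 0 < T /\
  (forall x, T < x -> PI/2 - atan x < eps) /\ (forall x, x < -T -> atan x + PI/2 < eps).
Proof.
  intros He. set (e := Rmin eps 1).
  assert (He0 : 0 < e) by (unfold e; apply Rmin_glb_lt; lra).
  assert (He1 : e <= eps) by apply Rmin_l.
  assert (He2 : e <= 1) by apply Rmin_r.
  assert (HPI := PI2_1).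
  assert (Ha : atan (tan (PI/2 - e)) = PI/2 - e) by (apply atan_tan; lra).
  exists (Rmax 1 (tan (PI/2 - e))). split. { apply Rlt_le_trans with 1. lra. apply Rmax_l. }
  split.
  - intros x Hx. assert (atan (tan (PI/2 - e)) < atan x).
    { apply atan_increasing. apply Rle_lt_trans with (2:=Hx). apply Rmax_r. }
    lra.
  - intros x Hx. assert (atan x < atan (- tan (PI/2 - e))).
    { apply atan_increasing. apply Rlt_le_trans with (1:=Hx). apply Ropp_le_contravar. apply Rmax_r. }
    rewrite atan_opp in H. lra.
Qed.

Section OneDim.
Context {V : CompleteNormedModule R_AbsRing}.

Lemma RInt_bound_w (g : R -> V) M a b :
  (forall t, continuous g t) -> (forall t, norm (g t) <= M * w t) ->
  norm (RInt g a b) <= M * Rabs (atan b - atan a).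
Proof.
  intros Hc Hb.
  assert (Hex : forall a b, ex_RInt g a b) by (intros; apply ex_RInt_continuous; intros; apply Hc).
  assert (H : forall a b, a <= b -> norm (RInt g a b) <= M * (atan b - atan a)).
  { intros a' b' Hab. apply (norm_RInt_le g (fun t => M * w t) a' b').
    - exact Hab.
    - intros; apply Hb.
    - apply RInt_correct, Hex.
    - apply (is_RInt_scal (V:=R_NormedModule) w a' b' M _ (is_RInt_w a' b')). }
  destruct (Rle_or_lt a b) as [Hab|Hab].
  - rewrite Rabs_right. apply H; auto.
    assert (atan a <= atan b) by (destruct Hab as [Hab|Hab]; [left; apply atan_increasing; auto| subst; lra]). lra.
  - rewrite <- (opp_RInt_swap g b a) by apply Hex. assert (Hn : norm (opp (RInt g b a)) = norm (RInt g b a)) by exact (norm_opp (K:=R_AbsRing) (V:=CompleteNormedModule.NormedModule R_AbsRing V) _). rewrite Hn.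
    rewrite Rabs_left1. replace (M * - (atan b - atan a)) with (M * (atan a - atan b)) by ring.
    apply H; lra.
    assert (atan b < atan a) by (apply atan_increasing; auto). lra.
Qed.
End OneDim.


Notation mI := (Rbar_locally m_infty).
Notation pI := (Rbar_locally p_infty).

Lemma ag_lem {G : AbelianGroup} (x y z : G) : minus (plus x (plus y z)) y = plus x z.
Proof.
  unfold minus. rewrite (plus_comm y z). rewrite (plus_assoc x z y).
  rewrite <- plus_assoc. 
  transitivity (plus (plus x z) (zero : G)). f_equal. apply plus_opp_r. apply plus_zero_r.
Qed.

Section OneDim2.
Context {V : CompleteNormedModule R_AbsRing}.

Lemma ex_gen (g : R -> V) M :
  (forall t, continuous g t) -> (forall t, norm (g t) <= M * w t) ->
  ex_RInt_gen g mI pI.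
Proof.
  intros Hc Hb.
  assert (Hex : forall a b, ex_RInt g a b) by (intros; apply ex_RInt_continuous; intros; apply Hc).
  assert (HM : 0 <= M). { specialize (Hb 0). assert (0 <= norm (g 0)) by apply norm_ge_0.
    assert (0 < w 0) by apply w_pos. nra. }
  unfold ex_RInt_gen, is_RInt_gen.
  refine (proj1 (filterlimi_locally_cauchy (F := filter_prod mI pI) (fun ab => is_RInt g (fst ab) (snd ab)) _) _).
  - exists (fun _ => True) (fun _ => True); try (exists 0; auto).
    intros a b _ _. split.
    + exists (RInt g a b). apply RInt_correct, Hex.
    + intros y1 y2 H1 H2. simpl in *. apply is_RInt_unique in H1. apply is_RInt_unique in H2. congruence.
  - intros eps.
    destruct (atan_tails (eps / (2 * (M + 1)))) as [T [HT [Hp Hm]]].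
    { apply Rdiv_lt_0_compat. apply eps. lra. }
    exists (fun ab => fst ab < -T /\ T < snd ab). split.
    + exists (fun a => a < -T) (fun b => T < b).
      * exists (-T). auto.
      * exists T. auto.
      * intros; simpl; auto.
    + intros [a b] [a' b'] [Ha Hb'] [Ha' Hb''] u' v' Hu Hv. simpl in *.
      apply is_RInt_unique in Hu. apply is_RInt_unique in Hv. subst u' v'.
      apply (norm_compat1 (K:=R_AbsRing) (V := CompleteNormedModule.NormedModule R_AbsRing V)).
      assert (E : RInt g a' b' = plus (RInt g a' a) (plus (RInt g a b) (RInt g b b'))).
      { rewrite (RInt_Chasles g a b b') by apply Hex. rewrite RInt_Chasles by apply Hex. reflexivity. }
      assert (E2 : minus (plus (RInt g a' a) (plus (RInt g a b) (RInt g b b'))) (RInt g a b)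
                   = plus (RInt g a' a) (RInt g b b')).
      { exact (ag_lem (G:=CompleteNormedModule.AbelianGroup R_AbsRing V) _ _ _). }
      eapply Rle_lt_trans. apply Req_le. apply f_equal. rewrite E. exact E2.
      eapply Rle_lt_trans. apply (norm_triangle (K:=R_AbsRing) (V:=CompleteNormedModule.NormedModule R_AbsRing V)).
      eapply Rle_lt_trans. apply Rplus_le_compat; apply (RInt_bound_w g M); assumption.
      assert (H1 := Hm a Ha). assert (H2 := Hm a' Ha'). assert (H3 := Hp b Hb'). assert (H4 := Hp b' Hb'').
      assert (B1 := atan_bound a). assert (B2 := atan_bound a'). assert (B3 := atan_bound b). assert (B4 := atan_bound b').
      assert (K1 : Rabs (atan a - atan a') <= eps / (2 * (M + 1))) by (apply Rabs_le; lra).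
      assert (K2 : Rabs (atan b' - atan b) <= eps / (2 * (M + 1))) by (apply Rabs_le; lra).
      assert (eps / (2 * (M+1)) * (2 * (M+1)) = eps) by (field; lra).
      assert (0 < eps) by apply eps.
      nra.
Qed.
End OneDim2.


Lemma is_RInt_Cmult (g : R -> C) (c : C) a b y :
  is_RInt (V:=C_R_NormedModule) g a b y ->
  is_RInt (V:=C_R_NormedModule) (fun t => Cmult c (g t)) a b (Cmult c y).
Proof.
  intros H.
  assert (H1 := is_RInt_fct_extend_fst (U:=R_NormedModule) (V:=R_NormedModule) g a b y H).
  assert (H2 := is_RInt_fct_extend_snd (U:=R_NormedModule) (V:=R_NormedModule) g a b y H).
  destruct c as [c1 c2]. destruct y as [y1 y2]. simpl in H1, H2.
  apply (is_RInt_fct_extend_pair (U:=R_NormedModule) (V:=R_NormedModule)); simpl.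
  - apply (is_RInt_ext (V:=R_NormedModule) (fun t => minus (scal c1 (fst (g t))) (scal c2 (snd (g t))))).
    { intros t _. destruct (g t); simpl. unfold minus, plus, opp, scal; simpl. unfold mult; simpl. ring. }
    replace (c1 * y1 - c2 * y2) with (minus (scal c1 y1) (scal c2 y2)).
    2:{ unfold minus, plus, opp, scal; simpl. unfold mult; simpl. ring. }
    apply (is_RInt_minus (V:=R_NormedModule)); apply (is_RInt_scal (V:=R_NormedModule)); assumption.
  - apply (is_RInt_ext (V:=R_NormedModule) (fun t => plus (scal c1 (snd (g t))) (scal c2 (fst (g t))))).
    { intros t _. destruct (g t); simpl. unfold minus, plus, opp, scal; simpl. unfold mult; simpl. ring. }
    replace (c1 * y2 + c2 * y1) with (plus (scal c1 y2) (scal c2 y1)).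
    2:{ unfold minus, plus, opp, scal; simpl. unfold mult; simpl. ring. }
    apply (is_RInt_plus (V:=R_NormedModule)); apply (is_RInt_scal (V:=R_NormedModule)); assumption.
Qed.

Lemma lift_lin {V W : NormedModule R_AbsRing} (L : V -> W) k (g : R -> V) l
  {Fa Fb : (R -> Prop) -> Prop} {FFa : Filter Fa} {FFb : Filter Fb} :
  (forall z z', norm (minus (L z) (L z')) <= k * norm (minus z z')) ->
  (forall a b y, is_RInt g a b y -> is_RInt (fun t => L (g t)) a b (L y)) ->
  is_RInt_gen g Fa Fb l -> is_RInt_gen (fun t => L (g t)) Fa Fb (L l).
Proof.
  intros HL Hi H P [eps HP].
  assert (Hnf := norm_factor_gt_0 (K:=R_AbsRing) (V:=V)).
  set (k' := Rabs k + 1).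
  assert (Hk' : 0 < k') by (unfold k'; assert (0 <= Rabs k) by apply Rabs_pos; lra).
  assert (Hd : 0 < eps / (k' * @norm_factor _ V)).
  { apply Rdiv_lt_0_compat. apply eps. nra. }
  specialize (H (fun y => P (L y))).
  assert (Hloc : locally l (fun y => P (L y))).
  { exists (mkposreal _ Hd). intros y Hy. apply HP. apply norm_compat1.
    apply (norm_compat2 _ _ (mkposreal _ Hd)) in Hy. simpl in Hy.
    eapply Rle_lt_trans. apply HL.
    assert (0 <= norm (minus y l)) by apply norm_ge_0.
    assert (k <= k') by (unfold k'; assert (k <= Rabs k) by apply Rle_abs; lra).
    apply Rle_lt_trans with (k' * norm (minus y l)). nra.
    replace (pos eps) with (k' * (@norm_factor _ V * (eps / (k' * @norm_factor _ V)))) by (field; lra).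
    apply Rmult_lt_compat_l; auto. }
  specialize (H Hloc). unfold filtermapi in *.
  eapply filter_imp; [|exact H]. intros ab [y [Hy1 Hy2]]. exists (L y). split; auto.
Qed.

Definition good1 (g : R -> C) (M : R) :=
  (forall t, continuous g t) /\ (forall t, Cmod (g t) <= M * w t).

Lemma intR_is g M : good1 g M -> is_RInt_gen (V:=C_R_NormedModule) g mI pI (intR g).
Proof.
  intros [Hc Hb]. unfold intR.
  apply (RInt_gen_correct (V:=C_R_CompleteNormedModule)).
  apply (ex_gen (V:=C_R_CompleteNormedModule) g M Hc).
  intros t. rewrite <- Cmod_norm. apply Hb.
Qed.

Definition Kw : R := RInt_gen (V:=R_CompleteNormedModule) w mI pI.

Lemma Kw_is : is_RInt_gen (V:=R_NormedModule) w mI pI Kw.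
Proof.
  unfold Kw. apply (RInt_gen_correct (V:=R_CompleteNormedModule)).
  apply (ex_gen (V:=R_CompleteNormedModule) w 1).
  - apply w_cont.
  - intros t. rewrite Rmult_1_l. assert (H := w_pos t). unfold norm; simpl. unfold abs; simpl.
    rewrite Rabs_right; lra.
Qed.

Lemma intR_norm g M : good1 g M -> Cmod (intR g) <= M * Kw.
Proof.
  intros Hg. rewrite Cmod_norm.
  apply (RInt_gen_norm (V:=C_R_CompleteNormedModule) (Fa:=mI) (Fb:=pI) g (fun t => M * w t) (intR g) (M * Kw)).
  - exists (fun a => a < 0) (fun b => 0 < b). exists 0; auto. exists 0; auto.
    intros; simpl; lra.
  - exists (fun a => True) (fun b => True). exists 0; auto. exists 0; auto.
    intros; simpl. rewrite <- Cmod_norm. apply Hg.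
  - apply (intR_is g M Hg).
  - apply (is_RInt_gen_scal (V:=R_NormedModule) w M Kw Kw_is).
Qed.

Lemma good1_ex g M : good1 g M -> ex_RInt_gen (V:=C_R_NormedModule) g mI pI.
Proof. intros H. exists (intR g). apply (intR_is g M H). Qed.

Lemma is_uniq (g : R -> C) l : is_RInt_gen (V:=C_R_NormedModule) g mI pI l -> intR g = l.
Proof. intros H. unfold intR. apply (is_RInt_gen_unique (V:=C_R_CompleteNormedModule)). exact H. Qed.

Lemma intR_minus f g M N : good1 f M -> good1 g N ->
  intR (fun t => Cminus (f t) (g t)) = Cminus (intR f) (intR g).
Proof.
  intros Hf Hg. apply is_uniq.
  apply (is_RInt_gen_minus (V:=C_R_NormedModule) f g _ _ (intR_is f M Hf) (intR_is g N Hg)).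
Qed.

Lemma intR_plus f g M N : good1 f M -> good1 g N ->
  intR (fun t => Cplus (f t) (g t)) = Cplus (intR f) (intR g).
Proof.
  intros Hf Hg. apply is_uniq.
  apply (is_RInt_gen_plus (V:=C_R_NormedModule) f g _ _ (intR_is f M Hf) (intR_is g N Hg)).
Qed.

Lemma minus_C (z z' : C) : @minus C_R_NormedModule z z' = Cminus z z'.
Proof. destruct z, z'. reflexivity. Qed.

Lemma intR_scal c f M : good1 f M ->
  intR (fun t => Cmult c (f t)) = Cmult c (intR f).
Proof.
  intros Hf. apply is_uniq.
  apply (lift_lin (V:=C_R_NormedModule) (W:=C_R_NormedModule) (fun z => Cmult c z) (Cmod c)).
  1,2: exact _.
  - intros z z'. rewrite <- !Cmod_norm. rewrite !minus_C.
    replace (Cminus (Cmult c z) (Cmult c z')) with (Cmult c (Cminus z z')) by ring.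
    rewrite Cmod_mult. right. reflexivity.
  - intros a b y Hy. apply is_RInt_Cmult. exact Hy.
  - apply (intR_is f M Hf).
Qed.


Lemma Cmod_sym (a b : C) : Cmod (Cminus a b) = Cmod (Cminus b a).
Proof.
  replace (Cminus a b) with (Copp (Cminus b a)) by ring.
  unfold Cmod, Copp. simpl. f_equal. ring.
Qed.

Lemma Cmod_minus_le (a b : C) : Cmod (Cminus a b) <= Cmod a + Cmod b.
Proof.
  unfold Cminus. eapply Rle_trans. apply Cmod_triangle.
  right. f_equal. unfold Cmod, Copp; simpl. f_equal. ring.
Qed.

Lemma ball_R (x y e : R) : Rabs (y - x) < e -> ball x e y.
Proof. intros H. exact H. Qed.

Lemma cont_C (g : R -> C) (t0 : R) (K : R) :
  (forall t, Rabs (t - t0) <= 1 -> Cmod (Cminus (g t0) (g t)) <= K * Rabs (t0 - t)) ->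
  continuous g t0.
Proof.
  intros H. apply (filterlim_locally (F:=locally t0) g (g t0)). intros eps.
  set (K' := Rabs K + 1).
  assert (HK : 0 < K') by (unfold K'; assert (0 <= Rabs K) by apply Rabs_pos; lra).
  assert (Hd : 0 < Rmin 1 (eps / K')).
  { apply Rmin_glb_lt. lra. apply Rdiv_lt_0_compat. apply eps. lra. }
  exists (mkposreal _ Hd). intros t Ht. simpl in Ht. unfold ball in Ht; simpl in Ht.
  unfold AbsRing_ball, abs, minus, plus, opp in Ht; simpl in Ht.
  apply (norm_compat1 (K:=R_AbsRing) (V:=C_R_NormedModule)).
  rewrite <- Cmod_norm, minus_C, Cmod_sym.
  assert (Ht1 : Rabs (t + - t0) < 1) by (eapply Rlt_le_trans; [exact Ht| apply Rmin_l]).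
  assert (Ht2 : Rabs (t + - t0) < eps / K')
    by (eapply Rlt_le_trans; [exact Ht| apply Rmin_r]).
  eapply Rle_lt_trans. apply H. unfold Rminus. lra.
  rewrite <- Rabs_Ropp. replace (- (t0 - t)) with (t + - t0) by ring.
  apply Rle_lt_trans with (K' * Rabs (t + - t0)).
  { apply Rmult_le_compat_r. apply Rabs_pos. unfold K'. assert (K <= Rabs K) by apply Rle_abs. lra. }
  replace (pos eps) with (K' * (eps / K')) by (field; lra).
  apply Rmult_lt_compat_l; auto.
Qed.

Record Wst (P : Type) := mkW {
  Wf : P -> R; Df : P -> P -> R; Cl : P -> P -> Prop;
  Wpos : forall p, 0 < Wf p; Drefl : forall p, Df p p = 0; Clrefl : forall p, Cl p p }.
Arguments Wf {P}. Arguments Df {P}. Arguments Cl {P}.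

Definition goodP {P} (S : Wst P) (f : P -> C) : Prop :=
  exists M, forall p, Cmod (f p) <= M * Wf S p /\
    forall p', Cl S p p' -> Cmod (Cminus (f p) (f p')) <= M * Df S p p' * Wf S p.

Definition ext {P} (S : Wst P) : Wst (P * R).
Proof.
  refine (mkW (P * R) (fun q => Wf S (fst q) * w (snd q))
    (fun q q' => Df S (fst q) (fst q') + Rabs (snd q - snd q'))
    (fun q q' => Cl S (fst q) (fst q') /\ Rabs (snd q - snd q') <= 1) _ _ _).
  - intros [p t]; simpl. apply Rmult_lt_0_compat. apply Wpos. apply w_pos.
  - intros [p t]; simpl. rewrite Drefl. replace (t - t) with 0 by ring. rewrite Rabs_R0. ring.
  - intros [p t]; simpl. split. apply Clrefl. replace (t - t) with 0 by ring. rewrite Rabs_R0. lra.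
Defined.

Section Step.
Context {P : Type} (S : Wst P).

Lemma step_good1 (f : P -> R -> C) M :
  (forall q, Cmod (f (fst q) (snd q)) <= M * Wf (ext S) q /\
    forall q', Cl (ext S) q q' -> Cmod (Cminus (f (fst q) (snd q)) (f (fst q') (snd q'))) <= M * Df (ext S) q q' * Wf (ext S) q) ->
  forall p, good1 (f p) (M * Wf S p).
Proof.
  intros HM p. split.
  - intros t0. apply (cont_C _ t0 (M * Wf S p * w t0)).
    intros t Ht. destruct (HM (p, t0)) as [_ H]. specialize (H (p, t)).
    simpl in H. rewrite Drefl, Rplus_0_l in H.
    eapply Rle_trans. apply H. split. apply Clrefl. rewrite <- Rabs_Ropp. replace (- (t0 - t)) with (t - t0) by ring. exact Ht.
    right. ring.
  - intros t. destruct (HM (p, t)) as [H _]. simpl in H. rewrite Rmult_assoc. exact H.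
Qed.

Lemma cont_minus_C (f g : R -> C) t : continuous f t -> continuous g t ->
  continuous (fun t => Cminus (f t) (g t)) t.
Proof.
  intros Hf Hg. apply (continuous_minus (V:=C_R_NormedModule) f g t Hf Hg).
Qed.

Lemma step (f : P -> R -> C) :
  goodP (ext S) (fun q => f (fst q) (snd q)) ->
  goodP S (fun p => intR (f p)).
Proof.
  intros [M HM]. assert (H0 := step_good1 f M HM).
  exists (M * Kw). intros p. split.
  - eapply Rle_trans. apply (intR_norm _ _ (H0 p)). right; ring.
  - intros p' Hp. rewrite <- (intR_minus _ _ _ _ (H0 p) (H0 p')).
    eapply Rle_trans. apply (intR_norm _ (M * Df S p p' * Wf S p)).
    2:{ right; ring. }
    split.
    + intros t. apply cont_minus_C; apply (H0 _).
    + intros t. destruct (HM (p, t)) as [_ H]. specialize (H (p', t)).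
      simpl in H. replace (t - t) with 0 in H by ring.
      eapply Rle_trans. apply H. split. exact Hp. rewrite Rabs_R0; lra.
      rewrite Rabs_R0. right; ring.
Qed.

Lemma step_bound (f : P -> R -> C) B :
  goodP (ext S) (fun q => f (fst q) (snd q)) ->
  (forall p t, Cmod (f p t) <= B * Wf S p * w t) ->
  forall p, Cmod (intR (f p)) <= B * Wf S p * Kw.
Proof.
  intros [M HM] HB p. assert (H0 := step_good1 f M HM p).
  apply (intR_norm _ (B * Wf S p)). split. apply H0. apply HB.
Qed.

Lemma step_minus (f g : P -> R -> C) :
  goodP (ext S) (fun q => f (fst q) (snd q)) ->
  goodP (ext S) (fun q => g (fst q) (snd q)) ->
  forall p, intR (fun t => Cminus (f p t) (g p t)) = Cminus (intR (f p)) (intR (g p)).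
Proof.
  intros [M HM] [N HN] p.
  apply (intR_minus _ _ _ _ (step_good1 f M HM p) (step_good1 g N HN p)).
Qed.

Lemma step_scal (f : P -> R -> C) c :
  goodP (ext S) (fun q => f (fst q) (snd q)) ->
  forall p, intR (fun t => Cmult c (f p t)) = Cmult c (intR (f p)).
Proof.
  intros [M HM] p. apply (intR_scal c _ _ (step_good1 f M HM p)).
Qed.

End Step.

Lemma goodP_minus {P} (S : Wst P) f g : goodP S f -> goodP S g -> goodP S (fun p => Cminus (f p) (g p)).
Proof.
  intros [M HM] [N HN]. exists (M + N). intros p. destruct (HM p) as [H1 H2]. destruct (HN p) as [H3 H4]. split.
  - eapply Rle_trans. apply Cmod_minus_le. lra.
  - intros p' Hp. replace (Cminus (Cminus (f p) (g p)) (Cminus (f p') (g p')))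
      with (Cminus (Cminus (f p) (f p')) (Cminus (g p) (g p'))) by ring.
    eapply Rle_trans. apply Cmod_minus_le.
    specialize (H2 p' Hp). specialize (H4 p' Hp). lra.
Qed.

Lemma goodP_scal {P} (S : Wst P) c f : goodP S f -> goodP S (fun p => Cmult c (f p)).
Proof.
  intros [M HM]. exists (Cmod c * M). intros p. destruct (HM p) as [H1 H2].
  assert (0 <= Cmod c) by apply Cmod_ge_0. split.
  - rewrite Cmod_mult. rewrite Rmult_assoc. apply Rmult_le_compat_l; auto.
  - intros p' Hp. replace (Cminus (Cmult c (f p)) (Cmult c (f p'))) with (Cmult c (Cminus (f p) (f p'))) by ring.
    rewrite Cmod_mult. rewrite !Rmult_assoc. apply Rmult_le_compat_l; auto.
    rewrite <- !Rmult_assoc. apply H2; auto.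
Qed.


Lemma intR_ext f g : (forall t, f t = g t) -> intR f = intR g.
Proof. intros H. f_equal. apply functional_extensionality. exact H. Qed.

Definition S1 : Wst R.
Proof.
  refine (mkW R w (fun a a' => Rabs (a - a')) (fun a a' => Rabs (a - a') <= 1) w_pos _ _).
  - intros; replace (p - p) with 0 by ring; apply Rabs_R0.
  - intros; replace (p - p) with 0 by ring; rewrite Rabs_R0; lra.
Defined.
Definition S2 := ext S1.
Definition S3 := ext S2.
Definition S4 := ext S3.

Lemma base_good1 g : goodP S1 g -> exists M, good1 g M.
Proof.
  intros [M HM]. exists M. split.
  - intros t0. apply (cont_C _ t0 (M * w t0)). intros t Ht.
    destruct (HM t0) as [_ H]. eapply Rle_trans. apply H. simpl.
    rewrite <- Rabs_Ropp. replace (- (t0 - t)) with (t - t0) by ring. exact Ht.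
    simpl. right; ring.
  - intros t. apply HM.
Qed.

Lemma base_bound g B : goodP S1 g -> (forall t, Cmod (g t) <= B * w t) -> Cmod (intR g) <= B * Kw.
Proof.
  intros Hg HB. destruct (base_good1 g Hg) as [M [Hc _]].
  apply intR_norm. split; auto.
Qed.

Definition unc4 (f : R -> R -> R -> R -> C) : ((R * R) * R) * R -> C :=
  fun q => f (fst (fst (fst q))) (snd (fst (fst q))) (snd (fst q)) (snd q).
Definition Good4 f := goodP S4 (unc4 f).
Definition Int4 (f : R -> R -> R -> R -> C) : C :=
  intR (fun a => intR (fun b => intR (fun c => intR (fun d => f a b c d)))).

Definition I4 (f : R -> R -> R -> R -> C) a b c := intR (fun d => f a b c d).
Definition I3 (f : R -> R -> R -> R -> C) a b := intR (fun c => I4 f a b c).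
Definition I2 (f : R -> R -> R -> R -> C) a := intR (fun b => I3 f a b).

Lemma Good4_3 f : Good4 f -> goodP S3 (fun p => I4 f (fst (fst p)) (snd (fst p)) (snd p)).
Proof. intros H. apply (step S3 (fun p d => f (fst (fst p)) (snd (fst p)) (snd p) d) H). Qed.
Lemma Good4_2 f : Good4 f -> goodP S2 (fun p => I3 f (fst p) (snd p)).
Proof. intros H. apply (step S2 (fun p c => I4 f (fst p) (snd p) c) (Good4_3 f H)). Qed.
Lemma Good4_1 f : Good4 f -> goodP S1 (fun a => I2 f a).
Proof. intros H. apply (step S1 (fun a b => I3 f a b) (Good4_2 f H)). Qed.

Lemma Int4_I f : Int4 f = intR (I2 f).
Proof. reflexivity. Qed.

Lemma Int4_minus f g : Good4 f -> Good4 g ->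
  Int4 (fun a b c d => Cminus (f a b c d) (g a b c d)) = Cminus (Int4 f) (Int4 g).
Proof.
  intros Hf Hg. rewrite !Int4_I.
  assert (E4 : forall a b c, I4 (fun a b c d => Cminus (f a b c d) (g a b c d)) a b c = Cminus (I4 f a b c) (I4 g a b c)).
  { intros a b c. apply (step_minus S3 (fun p d => f (fst (fst p)) (snd (fst p)) (snd p) d)
                                      (fun p d => g (fst (fst p)) (snd (fst p)) (snd p) d) Hf Hg ((a,b),c)). }
  assert (E3 : forall a b, I3 (fun a b c d => Cminus (f a b c d) (g a b c d)) a b = Cminus (I3 f a b) (I3 g a b)).
  { intros a b. unfold I3. erewrite (intR_ext _ (fun x => _)) by (intro; apply E4).
    apply (step_minus S2 (fun p c => I4 f (fst p) (snd p) c) (fun p c => I4 g (fst p) (snd p) c)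
      (Good4_3 f Hf) (Good4_3 g Hg) (a,b)). }
  assert (E2 : forall a, I2 (fun a b c d => Cminus (f a b c d) (g a b c d)) a = Cminus (I2 f a) (I2 g a)).
  { intros a. unfold I2. erewrite (intR_ext _ (fun x => _)) by (intro; apply E3).
    apply (step_minus S1 (fun a b => I3 f a b) (fun a b => I3 g a b) (Good4_2 f Hf) (Good4_2 g Hg) a). }
  erewrite (intR_ext _ (fun x => _)) by (intro; apply E2).
  destruct (base_good1 _ (Good4_1 f Hf)) as [M HM]. destruct (base_good1 _ (Good4_1 g Hg)) as [N HN].
  apply (intR_minus _ _ _ _ HM HN).
Qed.

Lemma Int4_scal c f : Good4 f ->
  Int4 (fun a b c' d => Cmult c (f a b c' d)) = Cmult c (Int4 f).
Proof.
  intros Hf. rewrite !Int4_I.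
  assert (E4 : forall a b c', I4 (fun a b c' d => Cmult c (f a b c' d)) a b c' = Cmult c (I4 f a b c')).
  { intros a b c'. apply (step_scal S3 (fun p d => f (fst (fst p)) (snd (fst p)) (snd p) d) c Hf ((a,b),c')). }
  assert (E3 : forall a b, I3 (fun a b c' d => Cmult c (f a b c' d)) a b = Cmult c (I3 f a b)).
  { intros a b. unfold I3. erewrite (intR_ext _ (fun x => _)) by (intro; apply E4).
    apply (step_scal S2 (fun p c' => I4 f (fst p) (snd p) c') c (Good4_3 f Hf) (a,b)). }
  assert (E2 : forall a, I2 (fun a b c' d => Cmult c (f a b c' d)) a = Cmult c (I2 f a)).
  { intros a. unfold I2. erewrite (intR_ext _ (fun x => _)) by (intro; apply E3).
    apply (step_scal S1 (fun a b => I3 f a b) c (Good4_2 f Hf) a). }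
  erewrite (intR_ext _ (fun x => _)) by (intro; apply E2).
  destruct (base_good1 _ (Good4_1 f Hf)) as [M HM].
  apply (intR_scal _ _ _ HM).
Qed.

Lemma Int4_bound f B : Good4 f ->
  (forall a b c d, Cmod (f a b c d) <= B * (w a * w b * w c * w d)) ->
  Cmod (Int4 f) <= B * Kw * Kw * Kw * Kw.
Proof.
  intros Hf HB. rewrite Int4_I.
  assert (B4 : forall a b c, Cmod (I4 f a b c) <= B * Kw * (w a * w b * w c)).
  { intros a b c. unfold I4.
    assert (H := step_bound S3 (fun p d => f (fst (fst p)) (snd (fst p)) (snd p) d) B Hf).
    assert (H' : forall p t, Cmod (f (fst (fst p)) (snd (fst p)) (snd p) t) <= B * Wf S3 p * w t).
    { intros [[a' b'] c'] t. change (Wf S3 ((a',b'),c')) with (w a' * w b' * w c').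
      rewrite Rmult_assoc. apply HB. }
    specialize (H H' ((a,b),c)). change (Wf S3 ((a,b),c)) with (w a * w b * w c) in H.
    cbn [fst snd] in H. eapply Rle_trans. exact H. right; ring. }
  assert (B3 : forall a b, Cmod (I3 f a b) <= B * Kw * Kw * (w a * w b)).
  { intros a b. unfold I3.
    assert (H := step_bound S2 (fun p c => I4 f (fst p) (snd p) c) (B * Kw) (Good4_3 f Hf)).
    assert (H' : forall p t, Cmod (I4 f (fst p) (snd p) t) <= B * Kw * Wf S2 p * w t).
    { intros [a' b'] t. change (Wf S2 (a',b')) with (w a' * w b').
      cbn [fst snd]. eapply Rle_trans. apply B4. right; ring. }
    specialize (H H' (a,b)). change (Wf S2 (a,b)) with (w a * w b) in H.
    cbn [fst snd] in H. eapply Rle_trans. exact H. right; ring. }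
  assert (B2 : forall a, Cmod (I2 f a) <= B * Kw * Kw * Kw * w a).
  { intros a. unfold I2.
    assert (H := step_bound S1 (fun a b => I3 f a b) (B * Kw * Kw) (Good4_2 f Hf)).
    assert (H' : forall p t, Cmod (I3 f p t) <= B * Kw * Kw * Wf S1 p * w t).
    { intros a' t. change (Wf S1 a') with (w a').
      eapply Rle_trans. apply B3. right; ring. }
    specialize (H H' a). change (Wf S1 a) with (w a) in H.
    eapply Rle_trans. exact H. right; ring. }
  apply (base_bound _ _ (Good4_1 f Hf) B2).
Qed.


Definition Q : Type := ((R * R) * R) * R.
Definition rho (q : Q) : R :=
  1 + (fst (fst (fst q))) ^ 2 + (snd (fst (fst q))) ^ 2 + (snd (fst q)) ^ 2 + (snd q) ^ 2.

Lemma rho_ge1 q : 1 <= rho q.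
Proof. destruct q as [[[a b] c] d]. unfold rho; simpl. nra. Qed.

Lemma rho_pos q : 0 < rho q.
Proof. generalize (rho_ge1 q). lra. Qed.

Lemma sq_close (a a' : R) : Rabs (a - a') <= 1 -> a' ^ 2 <= 2 * a ^ 2 + 2.
Proof.
  intros H. assert (E : (a - a') ^ 2 <= 1).
  { assert (0 <= Rabs (a - a')) by apply Rabs_pos. rewrite <- (pow2_abs (a - a')).
    replace 1 with (1 ^ 2) by ring. apply pow_incr. lra. }
  assert (0 <= (2 * a - a') ^ 2) by apply pow2_ge_0. nra.
Qed.

Lemma Cl4 (q q' : Q) : Cl S4 q q' ->
  Rabs (fst (fst (fst q)) - fst (fst (fst q'))) <= 1 /\ Rabs (snd (fst (fst q)) - snd (fst (fst q'))) <= 1 /\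
  Rabs (snd (fst q) - snd (fst q')) <= 1 /\ Rabs (snd q - snd q') <= 1.
Proof.
  destruct q as [[[a b] c] d], q' as [[[a' b'] c'] d']. simpl. tauto.
Qed.

Lemma Df4 (q q' : Q) : Df S4 q q' =
  Rabs (fst (fst (fst q)) - fst (fst (fst q'))) + Rabs (snd (fst (fst q)) - snd (fst (fst q'))) +
  Rabs (snd (fst q) - snd (fst q')) + Rabs (snd q - snd q').
Proof. destruct q as [[[a b] c] d], q' as [[[a' b'] c'] d']. reflexivity. Qed.

Lemma Wf4 (q : Q) : Wf S4 q = w (fst (fst (fst q))) * w (snd (fst (fst q))) * w (snd (fst q)) * w (snd q).
Proof. destruct q as [[[a b] c] d]. reflexivity. Qed.

Lemma Df4_nonneg q q' : 0 <= Df S4 q q'.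
Proof. rewrite Df4. repeat apply Rplus_le_le_0_compat; apply Rabs_pos. Qed.

Lemma rho_close q q' : Cl S4 q q' -> rho q' <= 9 * rho q.
Proof.
  intros H. apply Cl4 in H. destruct H as [H1 [H2 [H3 H4]]].
  apply sq_close in H1. apply sq_close in H2. apply sq_close in H3. apply sq_close in H4.
  unfold rho. nra.
Qed.

Lemma Cl4_sym q q' : Cl S4 q q' -> Cl S4 q' q.
Proof.
  destruct q as [[[a b] c] d], q' as [[[a' b'] c'] d']. simpl.
  rewrite (Rabs_minus_sym a), (Rabs_minus_sym b), (Rabs_minus_sym c), (Rabs_minus_sym d). tauto.
Qed.

Lemma rho_close' q q' : Cl S4 q q' -> rho q <= 9 * rho q'.
Proof. intros H. apply rho_close, Cl4_sym, H. Qed.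

Lemma rho_pow_close q q' k : Cl S4 q q' -> rho q ^ k <= 9 ^ k * rho q' ^ k.
Proof.
  intros H. rewrite <- Rpow_mult_distr. apply pow_incr. split.
  generalize (rho_pos q); lra. apply rho_close', H.
Qed.

Lemma W4_rho q : 1 <= Wf S4 q * rho q ^ 4.
Proof.
  rewrite Wf4. destruct q as [[[a b] c] d]. simpl fst; simpl snd.
  assert (Ha : w a * (1 + a^2) = 1) by (unfold w; field; nra).
  assert (Hb : w b * (1 + b^2) = 1) by (unfold w; field; nra).
  assert (Hc : w c * (1 + c^2) = 1) by (unfold w; field; nra).
  assert (Hd : w d * (1 + d^2) = 1) by (unfold w; field; nra).
  assert (P : (1 + a^2) * (1 + b^2) * (1 + c^2) * (1 + d^2) <= rho (((a,b),c),d) ^ 4).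
  { unfold rho; simpl fst; simpl snd. set (r := 1 + a^2 + b^2 + c^2 + d^2).
    assert (1 + a^2 <= r) by (unfold r; nra). assert (1 + b^2 <= r) by (unfold r; nra).
    assert (1 + c^2 <= r) by (unfold r; nra). assert (1 + d^2 <= r) by (unfold r; nra).
    replace (r ^ 4) with (r * r * r * r) by ring.
    repeat apply Rmult_le_compat; nra. }
  assert (0 < w a) by apply w_pos. assert (0 < w b) by apply w_pos.
  assert (0 < w c) by apply w_pos. assert (0 < w d) by apply w_pos.
  assert (1 = w a * w b * w c * w d * ((1 + a^2) * (1 + b^2) * (1 + c^2) * (1 + d^2))).
  { transitivity ((w a * (1 + a^2)) * (w b * (1 + b^2)) * (w c * (1 + c^2)) * (w d * (1 + d^2))).
    rewrite Ha, Hb, Hc, Hd; ring. ring. }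
  rewrite H3 at 1. apply Rmult_le_compat_l. 
  repeat apply Rmult_le_pos; lra. exact P.
Qed.

Definition Dec (g : Q -> C) (k : nat) : Prop :=
  exists M, forall q, Cmod (g q) * rho q ^ k <= M /\
    forall q', Cl S4 q q' -> Cmod (Cminus (g q) (g q')) * rho q ^ k <= M * Df S4 q q'.

Definition Gr (g : Q -> C) (m : nat) : Prop :=
  exists M, forall q, Cmod (g q) <= M * rho q ^ m /\
    forall q', Cl S4 q q' -> Cmod (Cminus (g q) (g q')) <= M * Df S4 q q' * rho q ^ m.

Lemma Dec_good g : Dec g 4 -> goodP S4 g.
Proof.
  intros [M HM]. exists M. intros q. destruct (HM q) as [H1 H2].
  assert (HW := W4_rho q). assert (0 < Wf S4 q) by apply Wpos.
  assert (0 <= Cmod (g q)) by apply Cmod_ge_0.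
  split.
  - apply Rle_trans with (Cmod (g q) * rho q ^ 4 * Wf S4 q). nra.
    apply Rmult_le_compat_r; lra.
  - intros q' Hq. specialize (H2 q' Hq).
    assert (0 <= Cmod (Cminus (g q) (g q'))) by apply Cmod_ge_0.
    apply Rle_trans with (Cmod (Cminus (g q) (g q')) * rho q ^ 4 * Wf S4 q). nra.
    apply Rmult_le_compat_r; lra.
Qed.

Lemma Dec_M_nonneg g k M : (forall q, Cmod (g q) * rho q ^ k <= M) -> 0 <= M.
Proof.
  intros H. specialize (H (((0,0),0),0)). assert (0 <= Cmod (g (((0,0),0),0))) by apply Cmod_ge_0.
  assert (0 < rho (((0,0),0),0) ^ k) by (apply pow_lt, rho_pos). nra.
Qed.

Lemma Gr_M_nonneg g m M : (forall q, Cmod (g q) <= M * rho q ^ m) -> 0 <= M.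
Proof.
  intros H. specialize (H (((0,0),0),0)). assert (0 <= Cmod (g (((0,0),0),0))) by apply Cmod_ge_0.
  assert (0 < rho (((0,0),0),0) ^ m) by (apply pow_lt, rho_pos). nra.
Qed.

Lemma Cmod_prod_diff (a b a' b' : C) :
  Cmod (Cminus (Cmult a b) (Cmult a' b')) <= Cmod (Cminus a a') * Cmod b + Cmod a' * Cmod (Cminus b b').
Proof.
  replace (Cminus (Cmult a b) (Cmult a' b')) with (Cplus (Cmult (Cminus a a') b) (Cmult a' (Cminus b b'))) by ring.
  eapply Rle_trans. apply Cmod_triangle. rewrite !Cmod_mult. lra.
Qed.

Lemma Dec_mul f g m k : Dec f (m + k) -> Gr g m -> Dec (fun q => Cmult (f q) (g q)) k.
Proof.
  intros [M1 H1] [M2 H2].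
  assert (HM1 : 0 <= M1) by (apply (Dec_M_nonneg f (m+k)); intros q; apply H1).
  assert (HM2 : 0 <= M2) by (apply (Gr_M_nonneg g m); intros q; apply H2).
  exists (M1 * M2 * (1 + 9 ^ (m + k))). intros q.
  destruct (H1 q) as [A1 B1]. destruct (H2 q) as [A2 B2].
  assert (Hr : 0 < rho q ^ k) by (apply pow_lt, rho_pos).
  assert (Hrm : 0 < rho q ^ m) by (apply pow_lt, rho_pos).
  assert (E : rho q ^ (m + k) = rho q ^ m * rho q ^ k) by apply pow_add.
  assert (H9 : 1 <= 9 ^ (m + k)) by (apply pow_R1_Rle; lra).
  assert (Cf : 0 <= Cmod (f q)) by apply Cmod_ge_0.
  split.
  - rewrite Cmod_mult.
    apply Rle_trans with (Cmod (f q) * (M2 * rho q ^ m) * rho q ^ k).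
    { apply Rmult_le_compat_r. lra. apply Rmult_le_compat_l; auto. }
    replace (Cmod (f q) * (M2 * rho q ^ m) * rho q ^ k) with (M2 * (Cmod (f q) * rho q ^ (m + k))) by (rewrite E; ring).
    apply Rle_trans with (M2 * M1). apply Rmult_le_compat_l; auto.
    assert (0 <= M1 * M2) by (apply Rmult_le_pos; auto). nra.
  - intros q' Hq. specialize (B1 q' Hq). specialize (B2 q' Hq).
    destruct (H1 q') as [A1' _].
    assert (HD := Df4_nonneg q q').
    assert (Hpc := rho_pow_close q q' (m + k) Hq).
    assert (Hr' : 0 < rho q' ^ (m + k)) by (apply pow_lt, rho_pos).
    assert (Cf' : 0 <= Cmod (f q')) by apply Cmod_ge_0.
    assert (Cd : 0 <= Cmod (Cminus (f q) (f q'))) by apply Cmod_ge_0.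
    assert (Cg : 0 <= Cmod (g q)) by apply Cmod_ge_0.
    apply Rle_trans with ((Cmod (Cminus (f q) (f q')) * Cmod (g q) + Cmod (f q') * Cmod (Cminus (g q) (g q'))) * rho q ^ k).
    { apply Rmult_le_compat_r. lra. apply Cmod_prod_diff. }
    rewrite Rmult_plus_distr_r.
    assert (T1 : Cmod (Cminus (f q) (f q')) * Cmod (g q) * rho q ^ k <= M2 * (M1 * Df S4 q q')).
    { apply Rle_trans with (Cmod (Cminus (f q) (f q')) * (M2 * rho q ^ m) * rho q ^ k).
      { apply Rmult_le_compat_r. lra. apply Rmult_le_compat_l; auto. }
      replace (Cmod (Cminus (f q) (f q')) * (M2 * rho q ^ m) * rho q ^ k)
        with (M2 * (Cmod (Cminus (f q) (f q')) * rho q ^ (m + k))) by (rewrite E; ring).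
      apply Rmult_le_compat_l; auto. }
    assert (T2 : Cmod (f q') * Cmod (Cminus (g q) (g q')) * rho q ^ k <= M2 * Df S4 q q' * (9 ^ (m + k) * M1)).
    { apply Rle_trans with (Cmod (f q') * (M2 * Df S4 q q' * rho q ^ m) * rho q ^ k).
      { apply Rmult_le_compat_r. lra. apply Rmult_le_compat_l; auto. }
      replace (Cmod (f q') * (M2 * Df S4 q q' * rho q ^ m) * rho q ^ k)
        with (M2 * Df S4 q q' * (Cmod (f q') * rho q ^ (m + k))) by (rewrite E; ring).
      apply Rmult_le_compat_l. nra.
      apply Rle_trans with (Cmod (f q') * (9 ^ (m + k) * rho q' ^ (m + k))).
      apply Rmult_le_compat_l; auto.
      replace (Cmod (f q') * (9 ^ (m + k) * rho q' ^ (m + k))) with (9 ^ (m + k) * (Cmod (f q') * rho q' ^ (m + k))) by ring.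
      apply Rmult_le_compat_l. lra. exact A1'. }
    eapply Rle_trans; [apply Rplus_le_compat; [exact T1|exact T2]|]; right; ring.
Qed.

Lemma Gr_mul f g m n : Gr f m -> Gr g n -> Gr (fun q => Cmult (f q) (g q)) (m + n).
Proof.
  intros [M1 H1] [M2 H2].
  assert (HM1 : 0 <= M1) by (apply (Gr_M_nonneg f m); intros q; apply H1).
  assert (HM2 : 0 <= M2) by (apply (Gr_M_nonneg g n); intros q; apply H2).
  exists (M1 * M2 * (1 + 9 ^ m)). intros q.
  destruct (H1 q) as [A1 B1]. destruct (H2 q) as [A2 B2].
  assert (Hrm : 0 < rho q ^ m) by (apply pow_lt, rho_pos).
  assert (Hrn : 0 < rho q ^ n) by (apply pow_lt, rho_pos).
  assert (E : rho q ^ (m + n) = rho q ^ m * rho q ^ n) by apply pow_add.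
  assert (H9 : 1 <= 9 ^ m) by (apply pow_R1_Rle; lra).
  assert (Cf : 0 <= Cmod (f q)) by apply Cmod_ge_0.
  assert (Cg : 0 <= Cmod (g q)) by apply Cmod_ge_0.
  split.
  - rewrite Cmod_mult. rewrite E.
    apply Rle_trans with ((M1 * rho q ^ m) * (M2 * rho q ^ n)).
    apply Rmult_le_compat; auto.
    assert (0 <= M1 * M2) by (apply Rmult_le_pos; auto).
    assert (0 <= rho q ^ m * rho q ^ n) by nra. 
    replace (M1 * rho q ^ m * (M2 * rho q ^ n)) with ((M1 * M2) * (rho q ^ m * rho q ^ n)) by ring.
    apply Rmult_le_compat_r; auto. nra.
  - intros q' Hq. specialize (B1 q' Hq). specialize (B2 q' Hq).
    destruct (H1 q') as [A1' _].
    assert (HD := Df4_nonneg q q').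
    assert (Hpc := rho_pow_close q' q m (Cl4_sym _ _ Hq)).
    assert (Cf' : 0 <= Cmod (f q')) by apply Cmod_ge_0.
    assert (Cd : 0 <= Cmod (Cminus (f q) (f q'))) by apply Cmod_ge_0.
    eapply Rle_trans. apply Cmod_prod_diff.
    assert (T1 : Cmod (Cminus (f q) (f q')) * Cmod (g q) <= (M1 * Df S4 q q' * rho q ^ m) * (M2 * rho q ^ n)).
    { apply Rmult_le_compat; auto. }
    assert (T2 : Cmod (f q') * Cmod (Cminus (g q) (g q')) <= (M1 * (9 ^ m * rho q ^ m)) * (M2 * Df S4 q q' * rho q ^ n)).
    { apply Rmult_le_compat; auto. apply Cmod_ge_0. eapply Rle_trans. exact A1'.
      apply Rmult_le_compat_l; auto. }
    rewrite E. eapply Rle_trans; [apply Rplus_le_compat; [exact T1|exact T2]|]; right; ring.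
Qed.

Lemma Gr_plus f g m : Gr f m -> Gr g m -> Gr (fun q => Cplus (f q) (g q)) m.
Proof.
  intros [M1 H1] [M2 H2]. exists (M1 + M2). intros q.
  destruct (H1 q) as [A1 B1]. destruct (H2 q) as [A2 B2]. split.
  - eapply Rle_trans. apply Cmod_triangle. lra.
  - intros q' Hq. specialize (B1 q' Hq). specialize (B2 q' Hq).
    replace (Cminus (Cplus (f q) (g q)) (Cplus (f q') (g q'))) with (Cplus (Cminus (f q) (f q')) (Cminus (g q) (g q'))) by ring.
    eapply Rle_trans. apply Cmod_triangle. lra.
Qed.

Lemma Gr_minus f g m : Gr f m -> Gr g m -> Gr (fun q => Cminus (f q) (g q)) m.
Proof.
  intros [M1 H1] [M2 H2]. exists (M1 + M2). intros q.
  destruct (H1 q) as [A1 B1]. destruct (H2 q) as [A2 B2]. split.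
  - eapply Rle_trans. apply Cmod_minus_le. lra.
  - intros q' Hq. specialize (B1 q' Hq). specialize (B2 q' Hq).
    replace (Cminus (Cminus (f q) (g q)) (Cminus (f q') (g q'))) with (Cminus (Cminus (f q) (f q')) (Cminus (g q) (g q'))) by ring.
    eapply Rle_trans. apply Cmod_minus_le. lra.
Qed.

Lemma Gr_mono f m n : (m <= n)%nat -> Gr f m -> Gr f n.
Proof.
  intros Hmn [M H]. assert (HM : 0 <= M) by (apply (Gr_M_nonneg f m); intros q; apply H).
  exists M. intros q. destruct (H q) as [A B].
  assert (Hp : rho q ^ m <= rho q ^ n) by (apply Rle_pow; [apply rho_ge1| exact Hmn]).
  split.
  - eapply Rle_trans. exact A. apply Rmult_le_compat_l; auto.
  - intros q' Hq. eapply Rle_trans. apply (B q' Hq). apply Rmult_le_compat_l; auto.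
    apply Rmult_le_pos; auto. apply Df4_nonneg.
Qed.

Lemma Gr_const c : Gr (fun _ => c) 0.
Proof.
  exists (Cmod c). intros q. split.
  - rewrite pow_O; lra.
  - intros q' _. replace (Cminus c c) with (RtoC 0) by ring. rewrite Cmod_0.
    rewrite pow_O, Rmult_1_r. apply Rmult_le_pos. apply Cmod_ge_0. apply Df4_nonneg.
Qed.


Lemma Gr_ext f g m : (forall q, f q = g q) -> Gr f m -> Gr g m.
Proof.
  intros E [M H]. exists M. intros q. rewrite <- !E. split. apply H.
  intros q' Hq. rewrite <- E. apply H, Hq.
Qed.

Lemma Cmod_RtoC_minus (a b : R) : Cmod (Cminus (RtoC a) (RtoC b)) = Rabs (a - b).
Proof. rewrite <- RtoC_minus. apply Cmod_R. Qed.

Lemma abs_le_rho1 x : Rabs x <= 1 + x ^ 2.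
Proof. unfold Rabs. destruct (Rcase_abs x); nra. Qed.

Lemma Gr_coord (pr : Q -> R) :
  (forall q, Rabs (pr q) <= rho q) -> (forall q q', Rabs (pr q - pr q') <= Df S4 q q') ->
  Gr (fun q => RtoC (pr q)) 1.
Proof.
  intros H1 H2. exists 1. intros q. split.
  - rewrite Cmod_R. rewrite pow_1, Rmult_1_l. apply H1.
  - intros q' _. rewrite Cmod_RtoC_minus. rewrite pow_1, Rmult_1_l.
    eapply Rle_trans. apply H2. assert (H := rho_ge1 q). assert (HD := Df4_nonneg q q'). nra.
Qed.

Lemma Gr_x1 : Gr (fun q => RtoC (fst (fst (fst q)))) 1.
Proof.
  apply Gr_coord.
  - intros [[[a b] c] d]. unfold rho; simpl. assert (H := abs_le_rho1 a). nra.
  - intros q q'. rewrite Df4. assert (H := Rabs_pos (snd (fst (fst q)) - snd (fst (fst q')))).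
    assert (H' := Rabs_pos (snd (fst q) - snd (fst q'))). assert (H'' := Rabs_pos (snd q - snd q')). lra.
Qed.
Lemma Gr_x2 : Gr (fun q => RtoC (snd (fst (fst q)))) 1.
Proof.
  apply Gr_coord.
  - intros [[[a b] c] d]. unfold rho; simpl. assert (H := abs_le_rho1 b). nra.
  - intros q q'. rewrite Df4. assert (H := Rabs_pos (fst (fst (fst q)) - fst (fst (fst q')))).
    assert (H' := Rabs_pos (snd (fst q) - snd (fst q'))). assert (H'' := Rabs_pos (snd q - snd q')). lra.
Qed.
Lemma Gr_x3 : Gr (fun q => RtoC (snd (fst q))) 1.
Proof.
  apply Gr_coord.
  - intros [[[a b] c] d]. unfold rho; simpl. assert (H := abs_le_rho1 c). nra.
  - intros q q'. rewrite Df4. assert (H := Rabs_pos (fst (fst (fst q)) - fst (fst (fst q')))).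
    assert (H' := Rabs_pos (snd (fst (fst q)) - snd (fst (fst q')))). assert (H'' := Rabs_pos (snd q - snd q')). lra.
Qed.
Lemma Gr_x4 : Gr (fun q => RtoC (snd q)) 1.
Proof.
  apply Gr_coord.
  - intros [[[a b] c] d]. unfold rho; simpl. assert (H := abs_le_rho1 d). nra.
  - intros q q'. rewrite Df4. assert (H := Rabs_pos (fst (fst (fst q)) - fst (fst (fst q')))).
    assert (H' := Rabs_pos (snd (fst (fst q)) - snd (fst (fst q')))). assert (H'' := Rabs_pos (snd (fst q) - snd (fst q'))). lra.
Qed.

Lemma Cmod_le_sum (z : C) : Cmod z <= Rabs (fst z) + Rabs (snd z).
Proof.
  destruct z as [x y]. unfold Cmod. cbn [fst snd].
  rewrite <- (sqrt_pow2 (Rabs x + Rabs y)).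
  2:{ assert (0 <= Rabs x) by apply Rabs_pos. assert (0 <= Rabs y) by apply Rabs_pos. lra. }
  apply sqrt_le_1_alt.
  assert (0 <= Rabs x) by apply Rabs_pos. assert (0 <= Rabs y) by apply Rabs_pos.
  rewrite <- (pow2_abs x), <- (pow2_abs y). nra.
Qed.

Lemma mvt_bound (f : R -> R) K a b :
  (forall x, ex_derive f x) -> (forall x, Rabs (Derive f x) <= K) -> Rabs (f a - f b) <= K * Rabs (a - b).
Proof.
  intros Hd HK. destruct (MVT_abs f (Derive f) b a) as [c [Hc _]].
  - intros c _. apply is_derive_Reals. apply Derive_correct. apply Hd.
  - rewrite Hc. apply Rmult_le_compat_r. apply Rabs_pos. apply HK.
Qed.

Lemma cos_lip a b : Rabs (cos a - cos b) <= Rabs (a - b).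
Proof.
  destruct (MVT_abs cos (fun x => - sin x) b a) as [c [Hc _]].
  - intros c _. apply derivable_pt_lim_cos.
  - rewrite Hc. rewrite <- (Rmult_1_l (Rabs (a - b))) at 2. apply Rmult_le_compat_r. apply Rabs_pos.
    rewrite Rabs_Ropp. apply Rabs_le. apply SIN_bound.
Qed.

Lemma sin_lip a b : Rabs (sin a - sin b) <= Rabs (a - b).
Proof.
  destruct (MVT_abs sin cos b a) as [c [Hc _]].
  - intros c _. apply derivable_pt_lim_sin.
  - rewrite Hc. rewrite <- (Rmult_1_l (Rabs (a - b))) at 2. apply Rmult_le_compat_r. apply Rabs_pos.
    apply Rabs_le. apply COS_bound.
Qed.

Lemma cis_lip a b : Cmod (Cminus (cis a) (cis b)) <= 2 * Rabs (a - b).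
Proof.
  eapply Rle_trans. apply Cmod_le_sum. unfold cis; simpl.
  assert (H1 := cos_lip a b). assert (H2 := sin_lip a b).
  replace (cos a + - cos b) with (cos a - cos b) by ring.
  replace (sin a + - sin b) with (sin a - sin b) by ring. lra.
Qed.

Lemma Cmod_cis a : Cmod (cis a) = 1.
Proof.
  unfold Cmod, cis. cbn [fst snd]. rewrite <- sqrt_1. f_equal.
  rewrite <- (sin2_cos2 a). unfold Rsqr. ring.
Qed.

Lemma Gr_cis (phi : Q -> R) m : Gr (fun q => RtoC (phi q)) m -> Gr (fun q => cis (phi q)) m.
Proof.
  intros [M H]. assert (HM : 0 <= M) by (apply (Gr_M_nonneg (fun q => RtoC (phi q)) m); intros q; apply H).
  exists (2 * M + 1). intros q. destruct (H q) as [A B].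
  assert (Hr : 1 <= rho q ^ m) by (apply pow_R1_Rle, rho_ge1).
  split.
  - rewrite Cmod_cis. nra.
  - intros q' Hq. specialize (B q' Hq). rewrite Cmod_RtoC_minus in B.
    eapply Rle_trans. apply cis_lip.
    assert (HD := Df4_nonneg q q').
    assert (0 <= Df S4 q q' * rho q ^ m) by nra. nra.
Qed.

Lemma sch1_lip r : schwartz1_real r -> exists K, forall s s', Rabs (r s) <= K /\ Rabs (r s - r s') <= K * Rabs (s - s').
Proof.
  intros [Hd Hb]. destruct (Hb 0%nat 0%nat) as [M0 H0]. destruct (Hb 1%nat 0%nat) as [M1 H1].
  exists (Rmax M0 M1). intros s s'. split.
  - specialize (H0 s). simpl in H0. rewrite Rmult_1_l in H0. eapply Rle_trans. exact H0. apply Rmax_l.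
  - eapply Rle_trans. apply (mvt_bound r M1).
    + intros x. apply (Hd 0%nat x).
    + intros x. specialize (H1 x). simpl in H1. rewrite Rmult_1_l in H1. exact H1.
    + apply Rmult_le_compat_r. apply Rabs_pos. apply Rmax_r.
Qed.

Lemma Gr_h (h : R -> C) s0 : schwartz1 h -> Gr (fun q => h (s0 - fst (fst (fst q)))) 0.
Proof.
  intros [Hr Hi]. destruct (sch1_lip _ Hr) as [K1 H1]. destruct (sch1_lip _ Hi) as [K2 H2].
  exists (K1 + K2). intros q. rewrite pow_O, Rmult_1_r. split.
  - eapply Rle_trans. apply Cmod_le_sum.
    destruct (H1 (s0 - fst (fst (fst q))) 0) as [A _]. destruct (H2 (s0 - fst (fst (fst q))) 0) as [B _].
    simpl in A, B. unfold Re, Im in A, B. lra.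
  - intros q' _. eapply Rle_trans. apply Cmod_le_sum.
    destruct (H1 (s0 - fst (fst (fst q))) (s0 - fst (fst (fst q')))) as [_ A].
    destruct (H2 (s0 - fst (fst (fst q))) (s0 - fst (fst (fst q')))) as [_ B].
    unfold Re, Im in A, B. simpl fst; simpl snd.
    replace (s0 - fst (fst (fst q)) - (s0 - fst (fst (fst q')))) with (- (fst (fst (fst q)) - fst (fst (fst q')))) in A, B by ring.
    rewrite Rabs_Ropp in A, B.
    assert (HD : Rabs (fst (fst (fst q)) - fst (fst (fst q'))) <= Df S4 q q').
    { rewrite Df4. assert (H := Rabs_pos (snd (fst (fst q)) - snd (fst (fst q')))).
      assert (H' := Rabs_pos (snd (fst q) - snd (fst q'))). assert (H'' := Rabs_pos (snd q - snd q')). lra. }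
    assert (0 <= K1) by (specialize (H1 0 0); destruct H1 as [H1 _]; assert (0 <= Rabs (fst (h 0))) by apply Rabs_pos; unfold Re in H1; lra).
    assert (0 <= K2) by (specialize (H2 0 0); destruct H2 as [H2 _]; assert (0 <= Rabs (snd (h 0))) by apply Rabs_pos; unfold Im in H2; lra).
    replace (fst (Cminus (h (s0 - fst (fst (fst q)))) (h (s0 - fst (fst (fst q'))))))
      with (fst (h (s0 - fst (fst (fst q)))) - fst (h (s0 - fst (fst (fst q'))))) by (simpl; ring).
    replace (snd (Cminus (h (s0 - fst (fst (fst q)))) (h (s0 - fst (fst (fst q'))))))
      with (snd (h (s0 - fst (fst (fst q)))) - snd (h (s0 - fst (fst (fst q'))))) by (simpl; ring).
    assert (K1 * Rabs (fst (fst (fst q)) - fst (fst (fst q'))) <= K1 * Df S4 q q') by (apply Rmult_le_compat_l; auto).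
    assert (K2 * Rabs (fst (fst (fst q)) - fst (fst (fst q'))) <= K2 * Df S4 q q') by (apply Rmult_le_compat_l; auto).
    unfold Rminus in *. lra.
Qed.


Lemma between_close (b b' t : R) : Rabs (b - b') <= 1 -> Rmin b b' <= t <= Rmax b b' -> Rabs (b - t) <= 1.
Proof.
  intros H [H1 H2]. unfold Rmin, Rmax in *. destruct (Rle_dec b b');
  unfold Rabs in *; destruct (Rcase_abs (b - b')); destruct (Rcase_abs (b - t)); lra.
Qed.

Lemma between_le (b b' t : R) : Rmin b b' <= t <= Rmax b b' -> Rabs (b - t) <= Rabs (b - b').
Proof.
  intros [H1 H2]. unfold Rmin, Rmax in *. destruct (Rle_dec b b');
  unfold Rabs in *; destruct (Rcase_abs (b - b')); destruct (Rcase_abs (b - t)); lra.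
Qed.

Lemma seg (g : R -> R) (zf : R -> Q) (s s' : R) K k q :
  (forall t, ex_derive g t) ->
  (forall t, Rmin s s' <= t <= Rmax s s' -> Cl S4 q (zf t)) ->
  (forall t, rho (zf t) ^ k * Rabs (Derive g t) <= K) ->
  Rabs (g s - g s') * rho q ^ k <= 9 ^ k * K * Rabs (s - s').
Proof.
  intros Hd Hc HK.
  destruct (MVT_abs g (Derive g) s' s) as [c [Hm Hcb]].
  - intros c _. apply is_derive_Reals, Derive_correct, Hd.
  - rewrite Hm. rewrite Rmin_comm, Rmax_comm in Hcb.
    assert (Hpc := rho_pow_close q (zf c) k (Hc c Hcb)).
    specialize (HK c).
    assert (0 <= Rabs (Derive g c)) by apply Rabs_pos.
    assert (0 <= Rabs (s - s')) by apply Rabs_pos.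

    assert (0 < rho (zf c) ^ k) by (apply pow_lt, rho_pos).
    assert (0 < 9 ^ k) by (apply pow_lt; lra).
    apply Rle_trans with (Rabs (Derive g c) * Rabs (s - s') * (9 ^ k * rho (zf c) ^ k)).
    { apply Rmult_le_compat_l. apply Rmult_le_pos; auto. exact Hpc. }
    replace (Rabs (Derive g c) * Rabs (s - s') * (9 ^ k * rho (zf c) ^ k))
      with (9 ^ k * (rho (zf c) ^ k * Rabs (Derive g c)) * Rabs (s - s')) by ring.
    apply Rmult_le_compat_r; auto. apply Rmult_le_compat_l; lra.
Qed.

Definition uncR (f : R -> R -> R -> R -> R) (q : Q) : R :=
  f (fst (fst (fst q))) (snd (fst (fst q))) (snd (fst q)) (snd q).

Lemma rho_def a b c d : rho (((a,b),c),d) = 1 + a ^ 2 + b ^ 2 + c ^ 2 + d ^ 2.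
Proof. reflexivity. Qed.

Lemma sch4_dec fr k : schwartz4_real fr -> exists M, forall q,
  Rabs (uncR fr q) * rho q ^ k <= M /\
  forall q', Cl S4 q q' -> Rabs (uncR fr q - uncR fr q') * rho q ^ k <= M * Df S4 q q'.
Proof.
  intros [Hd Hb].
  destruct (Hb nil k) as [M0 H0].
  destruct (Hb (0%nat :: nil) k) as [N0 G0].
  destruct (Hb (1%nat :: nil) k) as [N1 G1].
  destruct (Hb (2%nat :: nil) k) as [N2 G2].
  destruct (Hb (3%nat :: nil) k) as [N3 G3].
  set (N := Rmax (Rmax N0 N1) (Rmax N2 N3)).
  exists (Rmax M0 (9 ^ k * N)). intros [[[a b] c] d]. split.
  - unfold uncR; simpl fst; simpl snd. rewrite rho_def. rewrite Rmult_comm. eapply Rle_trans. apply H0. apply Rmax_l.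
  - intros [[[a' b'] c'] d'] Hq.
    assert (Hq' := Hq). apply Cl4 in Hq'. simpl fst in Hq'; simpl snd in Hq'. destruct Hq' as [Ca [Cb [Cc Cd]]].
    unfold uncR; simpl fst; simpl snd. rewrite Df4. simpl fst; simpl snd.
    set (q := (((a,b),c),d)).
    assert (S0 : Rabs (fr a b c d - fr a' b c d) * rho q ^ k <= 9 ^ k * N0 * Rabs (a - a')).
    { apply (seg (fun t => fr t b c d) (fun t => (((t,b),c),d))).
      - intros t. apply (Hd nil 0%nat t b c d).
      - intros t Ht. simpl. repeat split; try (replace (_ - _) with 0 by ring; rewrite Rabs_R0; lra).
        apply (between_close a a' t); auto.
      - intros t. rewrite rho_def. apply (G0 t b c d). }
    assert (S1 : Rabs (fr a' b c d - fr a' b' c d) * rho q ^ k <= 9 ^ k * N1 * Rabs (b - b')).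
    { apply (seg (fun t => fr a' t c d) (fun t => (((a',t),c),d))).
      - intros t. apply (Hd nil 1%nat a' t c d).
      - intros t Ht. simpl. repeat split; try (replace (_ - _) with 0 by ring; rewrite Rabs_R0; lra).
        exact Ca. apply (between_close b b' t); auto.
      - intros t. rewrite rho_def. apply (G1 a' t c d). }
    assert (S2 : Rabs (fr a' b' c d - fr a' b' c' d) * rho q ^ k <= 9 ^ k * N2 * Rabs (c - c')).
    { apply (seg (fun t => fr a' b' t d) (fun t => (((a',b'),t),d))).
      - intros t. apply (Hd nil 2%nat a' b' t d).
      - intros t Ht. simpl. repeat split; try (replace (_ - _) with 0 by ring; rewrite Rabs_R0; lra).
        exact Ca. exact Cb. apply (between_close c c' t); auto.
      - intros t. rewrite rho_def. apply (G2 a' b' t d). }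
    assert (S3 : Rabs (fr a' b' c' d - fr a' b' c' d') * rho q ^ k <= 9 ^ k * N3 * Rabs (d - d')).
    { apply (seg (fun t => fr a' b' c' t) (fun t => (((a',b'),c'),t))).
      - intros t. apply (Hd nil 3%nat a' b' c' t).
      - intros t Ht. simpl. repeat split.
        exact Ca. exact Cb. exact Cc. apply (between_close d d' t); auto.
      - intros t. rewrite rho_def. apply (G3 a' b' c' t). }
    set (X0 := fr a b c d - fr a' b c d). set (X1 := fr a' b c d - fr a' b' c d).
    set (X2 := fr a' b' c d - fr a' b' c' d). set (X3 := fr a' b' c' d - fr a' b' c' d').
    assert (Et : fr a b c d - fr a' b' c' d' = X0 + X1 + X2 + X3) by (unfold X0, X1, X2, X3; ring).
    rewrite Et.
    assert (T : Rabs (X0 + X1 + X2 + X3) <= Rabs X0 + Rabs X1 + Rabs X2 + Rabs X3).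
    { eapply Rle_trans. apply Rabs_triang. apply Rplus_le_compat_r.
      eapply Rle_trans. apply Rabs_triang. apply Rplus_le_compat_r. apply Rabs_triang. }
    assert (Hr : 0 < rho q ^ k) by (apply pow_lt, rho_pos).
    assert (H9 : 0 < 9 ^ k) by (apply pow_lt; lra).
    assert (HN0 : N0 <= N) by (unfold N; eapply Rle_trans; [apply Rmax_l|apply Rmax_l]).
    assert (HN1 : N1 <= N) by (unfold N; eapply Rle_trans; [apply Rmax_r|apply Rmax_l]).
    assert (HN2 : N2 <= N) by (unfold N; eapply Rle_trans; [apply Rmax_l|apply Rmax_r]).
    assert (HN3 : N3 <= N) by (unfold N; eapply Rle_trans; [apply Rmax_r|apply Rmax_r]).
    assert (A0 := Rabs_pos (a - a')). assert (A1 := Rabs_pos (b - b')).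
    assert (A2 := Rabs_pos (c - c')). assert (A3 := Rabs_pos (d - d')).
    assert (U0 : 9 ^ k * N0 * Rabs (a - a') <= 9 ^ k * N * Rabs (a - a')) by (apply Rmult_le_compat_r; auto; apply Rmult_le_compat_l; lra).
    assert (U1 : 9 ^ k * N1 * Rabs (b - b') <= 9 ^ k * N * Rabs (b - b')) by (apply Rmult_le_compat_r; auto; apply Rmult_le_compat_l; lra).
    assert (U2 : 9 ^ k * N2 * Rabs (c - c') <= 9 ^ k * N * Rabs (c - c')) by (apply Rmult_le_compat_r; auto; apply Rmult_le_compat_l; lra).
    assert (U3 : 9 ^ k * N3 * Rabs (d - d') <= 9 ^ k * N * Rabs (d - d')) by (apply Rmult_le_compat_r; auto; apply Rmult_le_compat_l; lra).
    apply Rle_trans with ((Rabs X0 + Rabs X1 + Rabs X2 + Rabs X3) * rho q ^ k).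
    { apply Rmult_le_compat_r; lra. }
    apply Rle_trans with (9 ^ k * N * (Rabs (a - a') + Rabs (b - b') + Rabs (c - c') + Rabs (d - d'))).
    { fold X0 in S0. fold X1 in S1. fold X2 in S2. fold X3 in S3. rewrite !Rmult_plus_distr_r. lra. }
    apply Rmult_le_compat_r. lra. apply Rmax_r.
Qed.

Lemma kappa_dec (kappa : R -> R -> R -> R -> C) k : schwartz4 kappa -> Dec (unc4 kappa) k.
Proof.
  intros [Hr Hi]. destruct (sch4_dec _ k Hr) as [M1 H1]. destruct (sch4_dec _ k Hi) as [M2 H2].
  exists (M1 + M2). intros q. destruct (H1 q) as [A1 B1]. destruct (H2 q) as [A2 B2].
  unfold uncR in *. unfold Re, Im in *. unfold unc4.
  assert (Hr0 : 0 < rho q ^ k) by (apply pow_lt, rho_pos).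
  split.
  - eapply Rle_trans. apply Rmult_le_compat_r. lra. apply Cmod_le_sum.
    rewrite Rmult_plus_distr_r. lra.
  - intros q' Hq. specialize (B1 q' Hq). specialize (B2 q' Hq).
    eapply Rle_trans. apply Rmult_le_compat_r. lra. apply Cmod_le_sum.
    rewrite Rmult_plus_distr_r.
    change (fst (Cminus ?x ?y)) with (fst x + - fst y).
    change (snd (Cminus ?x ?y)) with (snd x + - snd y).
    unfold Rminus in B1, B2. lra.
Qed.


Lemma deriv_quad (f : R -> C) x0 l K :
  (forall y, Cmod (Cminus (Cminus (f y) (f x0)) (Cmult (RtoC (y - x0)) l)) <= K * (y - x0) ^ 2) ->
  is_derive (V:=C_R_NormedModule) f x0 l.
Proof.
  intros HK. split.
  - apply is_linear_scal_l.
  - intros x Hx. apply (is_filter_lim_locally_unique (K:=R_AbsRing) (V:=R_NormedModule)) in Hx. subst x.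
    intros eps. set (K' := Rabs K + 1).
    assert (HK' : 0 < K') by (unfold K'; assert (0 <= Rabs K) by apply Rabs_pos; lra).
    assert (Hd : 0 < eps / K') by (apply Rdiv_lt_0_compat; [apply eps| lra]).
    exists (mkposreal _ Hd). intros y Hy. simpl in Hy. unfold ball in Hy; simpl in Hy.
    unfold AbsRing_ball, abs, minus, plus, opp in Hy; simpl in Hy.
    rewrite <- Cmod_norm. rewrite !minus_C. rewrite scal_R_Cmult.
    change (norm (minus y x0)) with (Rabs (y + - x0)).
    change (minus y x0) with (y + - x0).
    replace (y + - x0) with (y - x0) in * by ring.
    eapply Rle_trans. apply HK.
    assert (E : (y - x0) ^ 2 = Rabs (y - x0) * Rabs (y - x0)) by (rewrite <- pow2_abs; ring).
    rewrite E.
    assert (0 <= Rabs (y - x0)) by apply Rabs_pos.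
    assert (K <= K') by (unfold K'; assert (K <= Rabs K) by apply Rle_abs; lra).
    apply Rle_trans with (K' * Rabs (y - x0) * Rabs (y - x0)).
    { rewrite (Rmult_assoc K'). apply Rmult_le_compat_r. nra. exact H0. }
    apply Rmult_le_compat_r. auto.
    apply Rle_trans with (K' * (eps / K')). apply Rmult_le_compat_l; lra.
    right; field; lra.
Qed.

Lemma sin_le_abs x : Rabs (sin x) <= Rabs x.
Proof. assert (H := sin_lip x 0). rewrite sin_0 in H. replace (sin x - 0) with (sin x) in H by ring.
  replace (x - 0) with x in H by ring. exact H. Qed.

Lemma cos_m1 x : Rabs (cos x - 1) <= x ^ 2 / 2.
Proof.
  replace x with (2 * (x / 2)) at 1 by field. rewrite cos_2a_sin.
  replace (1 - 2 * sin (x / 2) * sin (x / 2) - 1) with (- (2 * (sin (x/2) * sin (x/2)))) by ring.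
  rewrite Rabs_Ropp. assert (H := sin_le_abs (x / 2)).
  assert (0 <= Rabs (sin (x/2))) by apply Rabs_pos.
  rewrite Rabs_mult, Rabs_mult. rewrite (Rabs_right 2) by lra.
  assert (Rabs (sin (x/2)) * Rabs (sin (x/2)) <= Rabs (x/2) * Rabs (x/2)) by (apply Rmult_le_compat; auto).
  assert (Rabs (x/2) * Rabs (x/2) = x ^ 2 / 4) by (rewrite <- Rabs_mult; rewrite Rabs_right; [field| nra]).
  lra.
Qed.

Lemma sin_m_id x : Rabs (sin x - x) <= 2 * x ^ 2.
Proof.
  destruct (Rle_lt_dec (Rabs x) 1) as [Hx|Hx].
  - destruct (MVT_abs (fun t => sin t - t) (fun t => cos t - 1) 0 x) as [c [Hc Hcb]].
    + intros c _. apply (derivable_pt_lim_minus sin id). apply derivable_pt_lim_sin. apply derivable_pt_lim_id.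
    + rewrite sin_0 in Hc. replace (sin x - x - (0 - 0)) with (sin x - x) in Hc by ring. rewrite Hc.
      replace (x - 0) with x by ring.
      assert (Hc2 : Rabs c <= Rabs x).
      { unfold Rmin, Rmax in Hcb. destruct (Rle_dec 0 x); unfold Rabs; destruct (Rcase_abs c); destruct (Rcase_abs x); lra. }
      assert (H1 := cos_m1 c). assert (c ^ 2 <= x ^ 2) by (rewrite <- (pow2_abs c), <- (pow2_abs x); apply pow_incr; split; [apply Rabs_pos| exact Hc2]).
      assert (0 <= Rabs x) by apply Rabs_pos.
      assert (x ^ 2 = Rabs x * Rabs x) by (rewrite <- pow2_abs; ring).
      assert (0 <= Rabs (cos c - 1)) by apply Rabs_pos.
      apply Rle_trans with (x ^ 2 / 2 * Rabs x). apply Rmult_le_compat_r; lra.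
      nra.
  - eapply Rle_trans. unfold Rminus. apply Rabs_triang. rewrite Rabs_Ropp.
    assert (H := SIN_bound x). assert (Rabs (sin x) <= 1) by (apply Rabs_le; lra).
    assert (x ^ 2 = Rabs x * Rabs x) by (rewrite <- pow2_abs; ring). nra.
Qed.

Lemma cis_taylor t : Cmod (Cminus (Cminus (cis t) (RtoC 1)) (Cmult Ci (RtoC t))) <= 3 * t ^ 2.
Proof.
  eapply Rle_trans. apply Cmod_le_sum. unfold cis, Ci, RtoC, Cminus, Cplus, Copp, Cmult. cbn [fst snd].
  assert (H1 := cos_m1 t). assert (H2 := sin_m_id t).
  replace (cos t + - 1 + - (0 * t - 1 * 0)) with (cos t - 1) by ring.
  replace (sin t + - 0 + - (0 * 0 + 1 * t)) with (sin t - t) by ring.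
  match goal with |- Rabs ?a + _ <= _ => replace a with (cos t - 1) by (simpl; ring) end. assert (0 <= t ^ 2) by apply pow2_ge_0. lra.
Qed.


Ltac Ceq := apply injective_projections; simpl; ring.

Lemma Dec_ext f g k : (forall q, f q = g q) -> Dec f k -> Dec g k.
Proof.
  intros E [M H]. exists M. intros q. rewrite <- !E. split. apply H.
  intros q' Hq. rewrite <- E. apply H, Hq.
Qed.

Lemma Gr_const_n c n : Gr (fun _ => c) n.
Proof. apply (Gr_mono _ 0). lia. apply Gr_const. Qed.

Definition ph (lam m u a b c d : R) : R :=
  m / (2 * lam) * b - lam * d + lam * c * (u - a) - lam / 2 * b * (u - a) ^ 2.

Lemma Gr_umx1 u : Gr (fun q => Cminus (RtoC u) (RtoC (fst (fst (fst q))))) 1.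
Proof. apply Gr_minus. apply Gr_const_n. apply Gr_x1. Qed.

Lemma Gr_phase lam m u :
  Gr (fun q => RtoC (ph lam m u (fst (fst (fst q))) (snd (fst (fst q))) (snd (fst q)) (snd q))) 3.
Proof.
  assert (G1 : Gr (fun q => Cmult (RtoC (m / (2 * lam))) (RtoC (snd (fst (fst q))))) 3).
  { apply (Gr_mono _ (0 + 1)). lia. apply Gr_mul. apply Gr_const. apply Gr_x2. }
  assert (G2 : Gr (fun q => Cmult (RtoC lam) (RtoC (snd q))) 3).
  { apply (Gr_mono _ (0 + 1)). lia. apply Gr_mul. apply Gr_const. apply Gr_x4. }
  assert (G3 : Gr (fun q => Cmult (Cmult (RtoC lam) (RtoC (snd (fst q)))) (Cminus (RtoC u) (RtoC (fst (fst (fst q)))))) 3).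
  { apply (Gr_mono _ (0 + 1 + 1)). lia. apply Gr_mul. apply Gr_mul. apply Gr_const. apply Gr_x3. apply Gr_umx1. }
  assert (G4 : Gr (fun q => Cmult (Cmult (Cmult (RtoC (lam / 2)) (RtoC (snd (fst (fst q))))) (Cminus (RtoC u) (RtoC (fst (fst (fst q)))))) (Cminus (RtoC u) (RtoC (fst (fst (fst q)))))) 3).
  { apply (Gr_mono _ (0 + 1 + 1 + 1)). lia. apply Gr_mul. apply Gr_mul. apply Gr_mul. apply Gr_const. apply Gr_x2. apply Gr_umx1. apply Gr_umx1. }
  eapply Gr_ext. 2:{ apply Gr_minus. apply Gr_plus. apply Gr_minus. exact G1. exact G2. exact G3. exact G4. }
  intros q. unfold ph. Ceq.
Qed.

Section Integrands.
Variables (lam : R) (kappa : R -> R -> R -> R -> C) (h : R -> C) (u : R).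
Hypothesis Hk : schwartz4 kappa.
Hypothesis Hh : schwartz1 h.

Definition Em (m : R) a b c d := Cmult (Cmult (kappa a b c d) (cis (ph lam m u a b c d))) (h (u - a)).

Lemma Gr_ch m : Gr (fun q => Cmult (cis (ph lam m u (fst (fst (fst q))) (snd (fst (fst q))) (snd (fst q)) (snd q))) (h (u - fst (fst (fst q))))) 3.
Proof.
  apply (Gr_mono _ (3 + 0)). lia. apply Gr_mul. apply Gr_cis. apply Gr_phase. apply Gr_h. exact Hh.
Qed.

Lemma Good_from (f : R -> R -> R -> R -> C) (G : Q -> C) m :
  (forall q, unc4 f q = Cmult (unc4 kappa q) (G q)) -> Gr G m -> Good4 f.
Proof.
  intros E HG. apply Dec_good. eapply Dec_ext.
  { intros q. symmetry. apply E. }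
  apply (Dec_mul _ _ m 4). apply kappa_dec. exact Hk. exact HG.
Qed.

Lemma Good_Em m : Good4 (Em m).
Proof.
  apply (Good_from (Em m) (fun q => Cmult (cis (ph lam m u (fst (fst (fst q))) (snd (fst (fst q))) (snd (fst q)) (snd q))) (h (u - fst (fst (fst q))))) 3).
  - intros q. unfold unc4, Em. ring.
  - apply Gr_ch.
Qed.

Definition E1 m a b c d := Cmult (Cmult (Cmult (RtoC a) (kappa a b c d)) (cis (ph lam m u a b c d))) (h (u - a)).
Definition E3 m a b c d := Cmult (Cmult (kappa a b c d) (cis (ph lam m u a b c d))) (piX3 lam h (u - a)).
Definition X2E m a b c d := Cmult (Cmult (Cmult (RtoC b) (kappa a b c d)) (cis (ph lam m u a b c d))) (h (u - a)).
Definition B2E m a b c d := Cmult (RtoC (b * b)) (Em m a b c d).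

Lemma Good_E1 m : Good4 (E1 m).
Proof.
  apply (Good_from (E1 m) (fun q => Cmult (RtoC (fst (fst (fst q)))) (Cmult (cis (ph lam m u (fst (fst (fst q))) (snd (fst (fst q))) (snd (fst q)) (snd q))) (h (u - fst (fst (fst q)))))) (1 + 3)).
  - intros q. unfold unc4, E1. ring.
  - apply Gr_mul. apply Gr_x1. apply Gr_ch.
Qed.

Lemma Good_X2E m : Good4 (X2E m).
Proof.
  apply (Good_from (X2E m) (fun q => Cmult (RtoC (snd (fst (fst q)))) (Cmult (cis (ph lam m u (fst (fst (fst q))) (snd (fst (fst q))) (snd (fst q)) (snd q))) (h (u - fst (fst (fst q)))))) (1 + 3)).
  - intros q. unfold unc4, X2E. ring.
  - apply Gr_mul. apply Gr_x2. apply Gr_ch.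
Qed.

Lemma Good_B2E m : Good4 (B2E m).
Proof.
  apply (Good_from (B2E m) (fun q => Cmult (Cmult (RtoC (snd (fst (fst q)))) (RtoC (snd (fst (fst q))))) (Cmult (cis (ph lam m u (fst (fst (fst q))) (snd (fst (fst q))) (snd (fst q)) (snd q))) (h (u - fst (fst (fst q)))))) (1 + 1 + 3)).
  - intros q. unfold unc4, B2E, Em. rewrite RtoC_mult. ring.
  - apply Gr_mul. apply Gr_mul. apply Gr_x2. apply Gr_x2. apply Gr_ch.
Qed.

Lemma Good_E3 m : Good4 (E3 m).
Proof.
  apply (Good_from (E3 m) (fun q => Cmult (cis (ph lam m u (fst (fst (fst q))) (snd (fst (fst q))) (snd (fst q)) (snd q)))
     (Cmult (Cmult (Copp Ci) (Cmult (RtoC lam) (Cminus (RtoC u) (RtoC (fst (fst (fst q))))))) (h (u - fst (fst (fst q)))))) (3 + (0 + (0 + 1) + 0))).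
  - intros q. unfold unc4, E3, piX3. rewrite RtoC_mult, RtoC_minus. ring.
  - apply Gr_mul. apply Gr_cis. apply Gr_phase. apply Gr_mul. apply Gr_mul. apply Gr_const. apply Gr_mul. apply Gr_const. apply Gr_umx1. apply Gr_h. exact Hh.
Qed.
End Integrands.


Lemma ident1 (lam u a : R) (K Cs Hh : C) : lam <> 0 ->
  Cmult (Cdiv Ci (RtoC lam))
    (Cminus (Cmult (Copp (Cmult Ci (RtoC (lam * u)))) (Cmult (Cmult K Cs) Hh))
            (Cmult (Cmult K Cs) (Cmult (Copp (Cmult Ci (RtoC (lam * (u - a))))) Hh)))
  = Cmult (Cmult (Cmult (RtoC a) K) Cs) Hh.
Proof.
  intros Hl. destruct K as [k1 k2], Cs as [c1 c2], Hh as [h1 h2].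
  apply injective_projections; simpl; field; auto.
Qed.

Lemma Int4_ext f g : (forall a b c d, f a b c d = g a b c d) -> Int4 f = Int4 g.
Proof.
  intros H. unfold Int4. apply intR_ext. intros a. apply intR_ext. intros b.
  apply intR_ext. intros c. apply intR_ext. intros d. apply H.
Qed.

Lemma part1 lam mu kappa h u : lam <> 0 -> schwartz4 kappa -> schwartz1 h ->
  Delta_x1 lam mu kappa h u =
  Cmult (Cdiv Ci (RtoC lam)) (Cminus (piX3 lam (piF lam mu kappa h) u) (piF lam mu kappa (piX3 lam h) u)).
Proof.
  intros Hl Hk Hh.
  set (A := Copp (Cmult Ci (RtoC (lam * u)))).
  change (piX3 lam (piF lam mu kappa h) u) with (Cmult A (piF lam mu kappa h u)).
  change (Delta_x1 lam mu kappa h u) with (Int4 (E1 lam kappa h u mu)).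
  change (piF lam mu kappa h u) with (Int4 (Em lam kappa h u mu)).
  change (piF lam mu kappa (piX3 lam h) u) with (Int4 (E3 lam kappa h u mu)).
  assert (G0 := Good_Em lam kappa h u Hk Hh mu).
  assert (G3 := Good_E3 lam kappa h u Hk Hh mu).
  rewrite <- (Int4_scal A _ G0).
  rewrite <- (Int4_minus _ _ (goodP_scal S4 A _ G0) G3).
  rewrite <- (Int4_scal _ _ (goodP_minus S4 _ _ (goodP_scal S4 A _ G0) G3)).
  apply Int4_ext. intros a b c d. unfold E1, Em, E3, piX3, A. symmetry. apply ident1. exact Hl.
Qed.

Lemma cis_add x y : cis (x + y) = Cmult (cis x) (cis y).
Proof. unfold cis. rewrite cos_plus, sin_plus. apply injective_projections; simpl; ring. Qed.

Lemma ident2 (lam y mu b : R) (K P Cth Hh : C) : lam <> 0 ->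
  Cminus (Cminus (Cmult (Cmult K (Cmult P Cth)) Hh) (Cmult (Cmult K P) Hh))
         (Cmult (Cmult (RtoC (y - mu)) (Cdiv Ci (RtoC (2 * lam)))) (Cmult (Cmult (Cmult (RtoC b) K) P) Hh))
  = Cmult (Cmult (Cmult K P) Hh) (Cminus (Cminus Cth (RtoC 1)) (Cmult Ci (RtoC ((y - mu) / (2 * lam) * b)))).
Proof.
  intros Hl. destruct K as [k1 k2], P as [p1 p2], Cth as [c1 c2], Hh as [h1 h2].
  apply injective_projections; simpl; field; auto.
Qed.

Lemma ident3 (lam : R) (D : C) : lam <> 0 ->
  D = Cmult (Cdiv (RtoC (2 * lam)) Ci) (Cmult (Cdiv Ci (RtoC (2 * lam))) D).
Proof.
  intros Hl. destruct D as [d1 d2].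
  apply injective_projections; simpl; field; auto.
Qed.

Lemma part2 lam mu kappa h u : lam <> 0 -> schwartz4 kappa -> schwartz1 h ->
  exists d : C,
    is_derive (V := C_R_NormedModule) (fun m : R => piF lam m kappa h u) mu d /\
    Delta_x2 lam mu kappa h u = Cmult (Cdiv (RtoC (2 * lam)) Ci) d.
Proof.
  intros Hl Hk Hh.
  set (D := Int4 (X2E lam kappa h u mu)).
  exists (Cmult (Cdiv Ci (RtoC (2 * lam))) D). split.
  2:{ change (Delta_x2 lam mu kappa h u) with D. apply ident3. exact Hl. }
  destruct (Good_B2E lam kappa h u Hk Hh mu) as [Mb HMb].
  assert (GX := Good_X2E lam kappa h u Hk Hh mu).
  apply (deriv_quad _ mu _ (3 / (4 * lam ^ 2) * Mb * Kw * Kw * Kw * Kw)).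
  intros y.
  change (Cmod (Cminus (Cminus (Int4 (Em lam kappa h u y)) (Int4 (Em lam kappa h u mu)))
     (Cmult (RtoC (y - mu)) (Cmult (Cdiv Ci (RtoC (2 * lam))) D))) <=
     3 / (4 * lam ^ 2) * Mb * Kw * Kw * Kw * Kw * (y - mu) ^ 2).
  set (cm := Cmult (RtoC (y - mu)) (Cdiv Ci (RtoC (2 * lam)))).
  replace (Cmult (RtoC (y - mu)) (Cmult (Cdiv Ci (RtoC (2 * lam))) D)) with (Cmult cm D) by (unfold cm; ring).
  assert (Gy := Good_Em lam kappa h u Hk Hh y).
  assert (Gm := Good_Em lam kappa h u Hk Hh mu).
  unfold D. rewrite <- (Int4_scal cm _ GX).
  rewrite <- (Int4_minus _ _ Gy Gm).
  rewrite <- (Int4_minus _ _ (goodP_minus S4 _ _ Gy Gm) (goodP_scal S4 cm _ GX)).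
  set (B := 3 * (y - mu) ^ 2 / (4 * lam ^ 2) * Mb).
  eapply Rle_trans.
  { apply (Int4_bound _ B (goodP_minus S4 _ _ (goodP_minus S4 _ _ Gy Gm) (goodP_scal S4 cm _ GX))).
    intros a b c d.
    set (th := (y - mu) / (2 * lam) * b).
    assert (Eph : ph lam y u a b c d = ph lam mu u a b c d + th) by (unfold ph, th; field; auto).
    unfold Em, X2E. rewrite Eph, cis_add. unfold cm. rewrite ident2 by exact Hl.
    fold th. rewrite Cmod_mult.
    assert (T := cis_taylor th).
    destruct (HMb (((a,b),c),d)) as [Hb _]. rewrite Wf4 in Hb. simpl fst in Hb; simpl snd in Hb.
    unfold unc4, B2E in Hb. simpl fst in Hb; simpl snd in Hb. rewrite Cmod_mult, Cmod_R in Hb.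
    unfold Em in Hb.
    set (e := Cmod (Cmult (Cmult (kappa a b c d) (cis (ph lam mu u a b c d))) (h (u - a)))) in *.
    assert (He : 0 <= e) by apply Cmod_ge_0.
    assert (Eb : Rabs (b * b) = b ^ 2) by (rewrite Rabs_right; [ring| nra]).
    rewrite Eb in Hb.
    assert (Eth : th ^ 2 = (y - mu) ^ 2 / (4 * lam ^ 2) * b ^ 2) by (unfold th; field; auto).
    apply Rle_trans with (e * (3 * th ^ 2)). apply Rmult_le_compat_l; auto.
    rewrite Eth. unfold B.
    assert (0 <= (y - mu) ^ 2 / (4 * lam ^ 2)).
    { apply Rmult_le_pos. apply pow2_ge_0. apply Rlt_le, Rinv_0_lt_compat. assert (0 < lam ^ 2) by (apply pow2_gt_0; auto). lra. }
    replace (e * (3 * ((y - mu) ^ 2 / (4 * lam ^ 2) * b ^ 2))) with (3 * ((y - mu) ^ 2 / (4 * lam ^ 2)) * (b ^ 2 * e)) by ring.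
    replace (3 * (y - mu) ^ 2 / (4 * lam ^ 2) * Mb * (w a * w b * w c * w d)) with (3 * ((y - mu) ^ 2 / (4 * lam ^ 2)) * (Mb * (w a * w b * w c * w d))) by (field; auto).
    apply Rmult_le_compat_l. lra. exact Hb. }
  unfold B. right. field. auto.
Qed.

Theorem mainTheorem2 :
  forall (lam mu : R) (kappa : R -> R -> R -> R -> C) (h : R -> C),
    lam <> 0%R -> schwartz4 kappa -> schwartz1 h ->
    (forall u : R,
       Delta_x1 lam mu kappa h u =
       Cmult (Cdiv Ci (RtoC lam))
         (Cminus (piX3 lam (piF lam mu kappa h) u)
                 (piF lam mu kappa (piX3 lam h) u))) /\
    (forall u : R, exists d : C,
       is_derive (V := C_R_NormedModule) (fun m : R => piF lam m kappa h u) mu d /\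
       Delta_x2 lam mu kappa h u = Cmult (Cdiv (RtoC (2 * lam)) Ci) d).
Proof.
  intros lam mu kappa h Hl Hk Hh. split.
  - intros u. apply part1; auto.
  - intros u. apply part2; auto.
Qed.
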